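(* Let $\Gamma$ be a regular $N\times 2$ potential game with potential $u$. Then the set $\mathrm{NE}$ of Nash equilibria of $\Gamma$ is finite. Moreover, there exists $\lambda_0>0$ and, for each $x^*\in\mathrm{NE}$, a continuous function $\lambda\mapsto x^{\lambda}(x^* )$ from $(0,\lambda_0)$ into $\Delta=[0,1]^N$ with the following properties. For every $\lambda\in(0,\lambda_0)$, the points $x^{\lambda}(x^* )$, $x^*\in\mathrm{NE}$, are pairwise distinct and $\mathrm{ND}(\lambda)=\{x^{\lambda}(x^* ):x^*\in\mathrm{NE}\}$. For every $x^*\in\mathrm{NE}$, $x^{\lambda}(x^* )\to x^*$ as $\lambda\to 0$. In particular, $\mathrm{ND}(\lambda)$ is finite and in one-to-one correspondence with $\mathrm{NE}$ for every $\lambda\in(0,\lambda_0)$.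
   Context: An $N\times 2$ game has players $i=1,\dots,N$, each with action set $A_i=\{a_i^1,a_i^2\}$, and utilities $u_i:A_1\times\cdots\times A_N\to\mathbb{R}$. It is a potential game with potential $u:A_1\times\cdots\times A_N\to\mathbb{R}$ if $u(a_i,a_{-i})-u(a_i',a_{-i})=u_i(a_i,a_{-i})-u_i(a_i',a_{-i})$ for all $i$, all $a_i,a_i'\in A_i$ and all $a_{-i}$. A mixed strategy of player $i$ is a number $x_i\in[0,1]$, the probability of playing $a_i^1$. Joint mixed strategies form $\Delta=[0,1]^N$. The multilinear extension of the potential is $$U(x)=\sum_{k_1,\dots,k_N\in\{1,2\}} z_1^{k_1}(x_1)\cdots z_N^{k_N}(x_N)\,u(a_1^{k_1},\dots,a_N^{k_N}),$$ where $z_i^1(x_i)=x_i$ and $z_i^2(x_i)=1-x_i$. We write $U(a_i^k,x_{-i})$ for the value of $U$ when player $i$ plays $a_i^k$ with probability 1 and the others play $x_{-i}$. The set of Nash equilibria is $\mathrm{NE}=\{x\in\Delta: U(x_i,x_{-i})\ge U(x_i',x_{-i})\ \text{for all } i \text{ and all } x_i'\in[0,1]\}$. For $\lambda>0$, the logit (smoothed) best response is $$\widehat{BR}^\lambda_i(x)=\frac{\exp(U(a_i^1,x_{-i})/\lambda)}{\sum_{k=1,2}\exp(U(a_i^k,x_{-i})/\lambda)},\qquad \widehat{BR}^\lambda(x)=(\widehat{BR}^\lambda_1(x),\dots,\widehat{BR}^\lambda_N(x)).$$ The set of Nash distributions is $\mathrm{ND}(\lambda)=\{x\in\Delta: x=\widehat{BR}^\lambda(x)\}$.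 Regularity. Let $x^*\in\mathrm{NE}$, and relabel each player's two actions so that $x_i^*>0$ for all $i$; thus each player either mixes ($0<x_i^*<1$) or plays $a_i^1$ purely ($x_i^*=1$). - $x^*$ is quasi-strict if, for every $i$ with $x_i^*=1$, the action $a_i^2$ is not a best response to $x_{-i}^*$, i.e. $U(a_i^1,x^*_{-i})>U(a_i^2,x^*_{-i})$. - Let the mixing players be $i=1,\dots,\tilde N$ after reordering. The restricted Hessian relative to $x^*$ is the $\tilde N\times\tilde N$ matrix $H(x)=\big(\partial^2 U(x)/\partial x_i\partial x_j\big)_{i,j=1,\dots,\tilde N}$, which may be evaluated at any $x\in\Delta$. - $x^*$ is regular if it is quasi-strict and $H(x^* )$ is invertible. - The potential game is regular if every Nash equilibrium is regular. *)

(* Defs.v *)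
From Stdlib Require Import Reals Lra List.
Open Scope R_scope.

(* Players are 0..N-1; a pure action of player i is a bool:
   true = a_i^1, false = a_i^2.  A pure profile is a list bool of length N.
   A mixed profile is x : nat -> R, x i = prob. of a_i^1 (coordinates >= N are 0). *)

Fixpoint upd (l : list bool) (i : nat) (b : bool) : list bool :=
  match l, i with
  | nil, _ => nil
  | _ :: t, O => b :: t
  | h :: t, S k => h :: upd t k b
  end.

Definition is_potential (N : nat) (ui : nat -> list bool -> R) (u : list bool -> R) : Prop :=
  forall i : nat, (i < N)%nat -> forall a : list bool, length a = N ->
  forall b b' : bool,
    u (upd a i b) - u (upd a i b') = ui i (upd a i b) - ui i (upd a i b').

(* multilinear extension: mle i n f x = sum over pure choices of positions i..i+n-1 *)
Fixpoint mle (i n : nat) (f : list bool -> R) (x : nat -> R) : R :=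
  match n with
  | O => f nil
  | S m => x i * mle (S i) m (fun l => f (true :: l)) x
           + (1 - x i) * mle (S i) m (fun l => f (false :: l)) x
  end.

Definition U (N : nat) (u : list bool -> R) (x : nat -> R) : R := mle 0 N u x.

Definition xupd (x : nat -> R) (i : nat) (v : R) : nat -> R :=
  fun j => if Nat.eqb j i then v else x j.

Definition Delta_set (N : nat) (x : nat -> R) : Prop :=
  forall i : nat, ((i < N)%nat -> 0 <= x i <= 1) /\ ((N <= i)%nat -> x i = 0).

Definition NE (N : nat) (u : list bool -> R) (x : nat -> R) : Prop :=
  Delta_set N x /\
  forall i : nat, (i < N)%nat -> forall y : R, 0 <= y <= 1 ->
    U N u (xupd x i y) <= U N u x.

Definition BR (N : nat) (u : list bool -> R) (lam : R) (x : nat -> R) (i : nat) : R :=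
  exp (U N u (xupd x i 1) / lam) /
  (exp (U N u (xupd x i 1) / lam) + exp (U N u (xupd x i 0) / lam)).

Definition ND (N : nat) (u : list bool -> R) (lam : R) (x : nat -> R) : Prop :=
  Delta_set N x /\ forall i : nat, (i < N)%nat -> x i = BR N u lam x i.

(* h is the second partial derivative d^2 U / dx_i dx_j at x
   (first differentiate in x_i, then in x_j) *)
Definition is_hess (N : nat) (u : list bool -> R) (x : nat -> R) (i j : nat) (h : R) : Prop :=
  exists g : R -> R,
    (forall t : R, derivable_pt_lim (fun s => U N u (xupd (xupd x j t) i s))
                                    (xupd x j t i) (g t)) /\
    derivable_pt_lim g (x j) h.

Fixpoint sum_lt (n : nat) (f : nat -> R) : R :=
  match n with
  | O => 0
  | S m => sum_lt m f + f m
  end.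

Definition mixing (x : nat -> R) (i : nat) : Prop := 0 < x i < 1.

(* quasi-strictness, with the relabeling (so that x_i* > 0) unfolded:
   pure players' unused action is not a best response *)
Definition quasi_strict (N : nat) (u : list bool -> R) (x : nat -> R) : Prop :=
  forall i : nat, (i < N)%nat ->
    (x i = 1 -> U N u (xupd x i 1) > U N u (xupd x i 0)) /\
    (x i = 0 -> U N u (xupd x i 0) > U N u (xupd x i 1)).

(* the restricted Hessian (indices = mixing players) at x is invertible:
   it exists and has a two-sided inverse matrix *)
Definition restricted_hessian_invertible (N : nat) (u : list bool -> R) (x : nat -> R) : Prop :=
  exists H G : nat -> nat -> R,
    (forall i j, (i < N)%nat -> (j < N)%nat -> mixing x i -> mixing x j ->
        is_hess N u x i j (H i j)) /\
    (forall i j, (i < N)%nat -> (j < N)%nat -> mixing x i -> mixing x j ->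
        sum_lt N (fun k => if Rlt_dec 0 (x k) then if Rlt_dec (x k) 1
                           then H i k * G k j else 0 else 0)
        = if Nat.eqb i j then 1 else 0) /\
    (forall i j, (i < N)%nat -> (j < N)%nat -> mixing x i -> mixing x j ->
        sum_lt N (fun k => if Rlt_dec 0 (x k) then if Rlt_dec (x k) 1
                           then G i k * H k j else 0 else 0)
        = if Nat.eqb i j then 1 else 0).

Definition regular_NE (N : nat) (u : list bool -> R) (x : nat -> R) : Prop :=
  quasi_strict N u x /\ restricted_hessian_invertible N u x.

Definition regular_game (N : nat) (u : list bool -> R) : Prop :=
  forall x, NE N u x -> regular_NE N u x.

(* Main.v *)
Require Import Defs.
From Stdlib Require Import Reals List Lra Lia Psatz FunctionalExtensionality ClassicalEpsilon Classical.
Open Scope R_scope.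


Lemma xupd_same x i v : xupd x i v i = v.
Proof. unfold xupd. now rewrite Nat.eqb_refl. Qed.

Lemma xupd_other x i j v : j <> i -> xupd x i v j = x j.
Proof. intro H. unfold xupd. apply Nat.eqb_neq in H. now rewrite H. Qed.

Lemma xupd_xupd_same x i a b : xupd (xupd x i a) i b = xupd x i b.
Proof. apply functional_extensionality; intro j. unfold xupd.
  destruct (Nat.eqb j i); auto. Qed.

Lemma xupd_comm x i j a b : i <> j -> xupd (xupd x i a) j b = xupd (xupd x j b) i a.
Proof. intro H. apply functional_extensionality; intro k. unfold xupd.
  destruct (Nat.eqb_spec k j); destruct (Nat.eqb_spec k i); subst; auto. lia. Qed.

Lemma xupd_id x i : xupd x i (x i) = x.
Proof. apply functional_extensionality; intro j. unfold xupd.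
  destruct (Nat.eqb_spec j i); subst; auto. Qed.

Lemma sum_lt_ext n f g : (forall k, (k < n)%nat -> f k = g k) -> sum_lt n f = sum_lt n g.
Proof. induction n; simpl; intros; auto. rewrite IHn by (intros; apply H; lia).
  rewrite H by lia. auto. Qed.

Lemma sum_lt_plus n f g : sum_lt n (fun k => f k + g k) = sum_lt n f + sum_lt n g.
Proof. induction n; simpl; auto. lra. rewrite IHn; lra. Qed.

Lemma sum_lt_minus n f g : sum_lt n (fun k => f k - g k) = sum_lt n f - sum_lt n g.
Proof. induction n; simpl; auto. lra. rewrite IHn; lra. Qed.

Lemma sum_lt_scal n c f : sum_lt n (fun k => c * f k) = c * sum_lt n f.
Proof. induction n; simpl; auto. lra. rewrite IHn; lra. Qed.

Lemma sum_lt_zero n f : (forall k, (k < n)%nat -> f k = 0) -> sum_lt n f = 0.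
Proof. induction n; simpl; intros; auto. rewrite IHn by (intros; apply H; lia).
  rewrite H by lia. lra. Qed.

Lemma sum_lt_abs n f : Rabs (sum_lt n f) <= sum_lt n (fun k => Rabs (f k)).
Proof. induction n; simpl. rewrite Rabs_R0; lra.
  eapply Rle_trans. apply Rabs_triang. lra. Qed.

Lemma sum_lt_le n f g : (forall k, (k < n)%nat -> f k <= g k) -> sum_lt n f <= sum_lt n g.
Proof. induction n; simpl; intros. lra.
  assert (sum_lt n f <= sum_lt n g) by (apply IHn; intros; apply H; lia).
  assert (f n <= g n) by (apply H; lia). lra. Qed.

Lemma sum_lt_const n c : sum_lt n (fun _ => c) = INR n * c.
Proof. induction n; simpl sum_lt. simpl; lra. rewrite IHn, S_INR. lra. Qed.

Lemma sum_lt_exch n m f :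
  sum_lt n (fun i => sum_lt m (fun j => f i j)) = sum_lt m (fun j => sum_lt n (fun i => f i j)).
Proof. induction n; simpl.
  - symmetry. apply sum_lt_zero. auto.
  - rewrite IHn. rewrite <- sum_lt_plus. auto. Qed.

Lemma sum_lt_delta n i f : (i < n)%nat ->
  sum_lt n (fun j => (if Nat.eqb i j then 1 else 0) * f j) = f i.
Proof. induction n; simpl; intros. lia.
  destruct (Nat.eq_dec i n).
  - subst. rewrite Nat.eqb_refl. rewrite sum_lt_zero. lra.
    intros k Hk. destruct (Nat.eqb_spec n k); [lia| lra].
  - rewrite IHn by lia. destruct (Nat.eqb_spec i n). lia. lra. Qed.

Lemma sum_lt_nonneg n f : (forall k, (k < n)%nat -> 0 <= f k) -> 0 <= sum_lt n f.
Proof. intros. replace 0 with (sum_lt n (fun _ => 0)). apply sum_lt_le; auto.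
  apply sum_lt_zero; auto. Qed.

Lemma sum_lt_term_le n f k : (forall j, (j < n)%nat -> 0 <= f j) -> (k < n)%nat -> f k <= sum_lt n f.
Proof. induction n; simpl; intros. lia.
  assert (0 <= sum_lt n f) by (apply sum_lt_nonneg; intros; apply H; lia).
  destruct (Nat.eq_dec k n). subst. lra.
  assert (f k <= sum_lt n f) by (apply IHn; [intros; apply H; lia| lia]).
  assert (0 <= f n) by (apply H; lia). lra. Qed.

Lemma fin_bound n (f : nat -> R) : exists B, 0 <= B /\ forall k, (k < n)%nat -> Rabs (f k) <= B.
Proof. exists (sum_lt n (fun k => Rabs (f k))). split.
  apply sum_lt_nonneg; intros; apply Rabs_pos.
  intros. apply (sum_lt_term_le n (fun k => Rabs (f k))); auto. intros; apply Rabs_pos. Qed.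

Lemma fin_bound2 n (f : nat -> nat -> R) : exists B, 0 <= B /\
  forall k j, (k < n)%nat -> (j < n)%nat -> Rabs (f k j) <= B.
Proof. destruct (fin_bound n (fun k => sum_lt n (fun j => Rabs (f k j)))) as [B [HB H]].
  exists B; split; auto. intros.
  eapply Rle_trans. 2: apply (H k H0).
  eapply Rle_trans. 2: apply Rle_abs.
  apply (sum_lt_term_le n (fun j => Rabs (f k j))); auto. intros; apply Rabs_pos. Qed.

Definition Ev (P : R -> Prop) := exists e, 0 < e /\ forall t, 0 < t -> t <= e -> P t.

Lemma Ev_and P Q : Ev P -> Ev Q -> Ev (fun t => P t /\ Q t).
Proof. intros [a [Ha HP]] [b [Hb HQ]]. exists (Rmin a b). split.
  apply Rmin_glb_lt; auto. intros t Ht Hle. split.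
  apply HP; auto. eapply Rle_trans; eauto. apply Rmin_l.
  apply HQ; auto. eapply Rle_trans; eauto. apply Rmin_r. Qed.

Lemma Ev_impl (P Q : R -> Prop) : Ev P -> (forall t, 0 < t -> P t -> Q t) -> Ev Q.
Proof. intros [a [Ha HP]] H. exists a. split; auto. Qed.

Lemma Ev_forall n (P : nat -> R -> Prop) :
  (forall i, (i < n)%nat -> Ev (P i)) -> Ev (fun t => forall i, (i < n)%nat -> P i t).
Proof. induction n; intros.
  - exists 1. split. lra. intros. lia.
  - assert (A : Ev (fun t => forall i, (i < n)%nat -> P i t)) by (apply IHn; intros; apply H; lia). clear IHn.
    assert (B := H n ltac:(lia)).
    destruct (Ev_and _ _ A B) as [e [He HH]]. exists e. split; auto.
    intros t Ht Hte i Hi. destruct (HH t Ht Hte) as [H1 H2].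
    destruct (Nat.eq_dec i n). subst; auto. apply H1. lia. Qed.

Lemma Ev_le c : 0 < c -> Ev (fun t => t <= c).
Proof. intros. exists c. split; auto. Qed.

Lemma Ev_pick P : Ev P -> exists t, 0 < t /\ P t.
Proof. intros [e [He H]]. exists e. split; auto. apply H; lra. Qed.

Lemma Ev_lin c b : 0 < b -> Ev (fun t => c * t <= b).
Proof. intros Hb. exists (b / (Rabs c + 1)). split.
  apply Rdiv_lt_0_compat; auto. pose proof (Rabs_pos c); lra.
  intros t Ht Hte. pose proof (Rabs_pos c).
  apply Rle_trans with (Rabs c * t). apply Rmult_le_compat_r. lra. apply Rle_abs.
  apply Rle_trans with ((Rabs c + 1) * t). nra.
  apply Rmult_le_reg_r with (/ (Rabs c + 1)). apply Rinv_0_lt_compat; lra.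
  replace ((Rabs c + 1) * t * / (Rabs c + 1)) with t by (field; lra). exact Hte. Qed.

Lemma mle_dep m : forall i f x x', (forall j, (i <= j < i + m)%nat -> x j = x' j) ->
  mle i m f x = mle i m f x'.
Proof. induction m; intros i f x x' H; simpl; auto.
  rewrite (IHm (S i) _ x x'), (IHm (S i) (fun l => f (false :: l)) x x') by (intros; apply H; lia).
  rewrite (H i) by lia. auto. Qed.

Lemma mle_aff m : forall i f x j t, (i <= j < i + m)%nat ->
  mle i m f (xupd x j t) = mle i m f (xupd x j 0) + t * (mle i m f (xupd x j 1) - mle i m f (xupd x j 0)).
Proof. induction m; intros i f x j t Hj. lia. simpl.
  destruct (Nat.eq_dec j i).
  - subst. rewrite !xupd_same.
    set (A := fun z => mle (S i) m (fun l => f (true :: l)) z).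
    set (B := fun z => mle (S i) m (fun l => f (false :: l)) z).
    assert (HA : forall a, A (xupd x i a) = A x).
    { intro a. unfold A. apply mle_dep. intros. rewrite xupd_other by lia. auto. }
    assert (HB : forall a, B (xupd x i a) = B x).
    { intro a. unfold B. apply mle_dep. intros. rewrite xupd_other by lia. auto. }
    unfold A, B in *. rewrite !HA, !HB. ring.
  - rewrite !xupd_other by auto.
    rewrite (IHm (S i) (fun l => f (true :: l)) x j t) by lia.
    rewrite (IHm (S i) (fun l => f (false :: l)) x j t) by lia. ring. Qed.

Definition Aff n (F : (nat -> R) -> R) := forall x j t, (j < n)%nat ->
  F (xupd x j t) = F (xupd x j 0) + t * (F (xupd x j 1) - F (xupd x j 0)).
Definition Dep n (F : (nat -> R) -> R) := forall x x', (forall j, (j < n)%nat -> x j = x' j) -> F x = F x'.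
Definition part j (F : (nat -> R) -> R) z := F (xupd z j 1) - F (xupd z j 0).

Lemma U_aff n u : Aff n (U n u).
Proof. intros x j t Hj. unfold U. apply mle_aff. lia. Qed.

Lemma U_dep n u : Dep n (U n u).
Proof. intros x x' H. unfold U. apply mle_dep. intros; apply H; lia. Qed.

Lemma part_xupd j F z c : part j F (xupd z j c) = part j F z.
Proof. unfold part. now rewrite !xupd_xupd_same. Qed.

Lemma aff_diff n F z j a b : Aff n F -> (j < n)%nat ->
  F (xupd z j a) - F (xupd z j b) = (a - b) * part j F z.
Proof. intros HA Hj. rewrite (HA z j a Hj), (HA z j b Hj). unfold part. ring. Qed.

Lemma aff_full n F z j : Aff n F -> (j < n)%nat ->
  F z = F (xupd z j 0) + z j * part j F z.
Proof. intros HA Hj. rewrite <- (xupd_id z j) at 1. rewrite (HA z j (z j) Hj). unfold part. ring. Qed.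

Lemma part_aff n F k : Aff n F -> Aff n (part k F).
Proof. intros HA x j t Hj. unfold part.
  destruct (Nat.eq_dec j k).
  - subst. rewrite !xupd_xupd_same. ring.
  - rewrite !(xupd_comm _ j k) by auto.
    rewrite (HA (xupd x k 1) j t Hj), (HA (xupd x k 0) j t Hj). ring. Qed.

Lemma part_dep n F k : Dep n F -> Dep n (part k F).
Proof. intros HD x x' H. unfold part. f_equal; apply HD; intros j Hj; unfold xupd;
  destruct (Nat.eqb j k); auto. Qed.

Definition hyb (m : nat) (x x' : nat -> R) : nat -> R := fun i => if Nat.ltb i m then x i else x' i.

Lemma telescope n F x x' : Aff n F -> Dep n F ->
  F x - F x' = sum_lt n (fun j => (x j - x' j) * part j F (hyb j x x')).
Proof. intros HA HD.
  assert (forall m, (m <= n)%nat -> F (hyb m x x') - F x' = sum_lt m (fun j => (x j - x' j) * part j F (hyb j x x'))).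
  { induction m; intros Hm; simpl.
    - replace (hyb 0 x x') with x'. lra. apply functional_extensionality; intro i. unfold hyb. auto.
    - rewrite <- IHm by lia.
      assert (E1 : hyb (S m) x x' = xupd (hyb m x x') m (x m)).
      { apply functional_extensionality; intro i. unfold hyb, xupd.
        destruct (Nat.eqb_spec i m). subst. assert (m <? S m = true)%nat by (apply Nat.ltb_lt; lia). rewrite H; auto.
        destruct (Nat.ltb_spec i (S m)); destruct (Nat.ltb_spec i m); auto; lia. }
      assert (E2 : hyb m x x' = xupd (hyb m x x') m (x' m)).
      { apply functional_extensionality; intro i. unfold hyb, xupd.
        destruct (Nat.eqb_spec i m). subst. rewrite Nat.ltb_irrefl; auto. auto. }
      rewrite E1.
      pose proof (aff_diff n F (hyb m x x') m (x m) (x' m) HA ltac:(lia)).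
      rewrite <- E2 in H. lra. }
  rewrite <- (H n) by lia. f_equal. apply HD. intros j Hj. unfold hyb.
  apply Nat.ltb_lt in Hj. rewrite Hj. auto. Qed.

Definition near n (y x : nat -> R) d := forall j, (j < n)%nat -> Rabs (x j - y j) <= d.

Definition mcont n (F : (nat -> R) -> R) y :=
  forall eps, 0 < eps -> Ev (fun d => forall x, near n y x d -> Rabs (F x - F y) <= eps).

Lemma mcont_const n c y : mcont n (fun _ => c) y.
Proof. intros eps He. exists 1. split. lra. intros. replace (c - c) with 0 by ring.
  rewrite Rabs_R0. lra. Qed.

Lemma mcont_coord n j y : (j < n)%nat -> mcont n (fun x => x j) y.
Proof. intros Hj eps He. exists eps. split; auto. intros t Ht Hte x Hx.
  specialize (Hx j Hj). lra. Qed.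

Lemma mcont_plus n F G y : mcont n F y -> mcont n G y -> mcont n (fun x => F x + G x) y.
Proof. intros HF HG eps He.
  apply (Ev_impl (fun d => (forall x, near n y x d -> Rabs (F x - F y) <= eps/2) /\
                            (forall x, near n y x d -> Rabs (G x - G y) <= eps/2))).
  apply Ev_and; [apply HF|apply HG]; lra.
  intros t Ht [H1 H2] x Hx. specialize (H1 x Hx). specialize (H2 x Hx).
  replace (F x + G x - (F y + G y)) with ((F x - F y) + (G x - G y)) by ring.
  eapply Rle_trans. apply Rabs_triang. lra. Qed.

Lemma mcont_opp n F y : mcont n F y -> mcont n (fun x => - F x) y.
Proof. intros HF eps He. apply (Ev_impl _ _ (HF eps He)). intros t Ht H x Hx.
  replace (- F x - - F y) with (- (F x - F y)) by ring. rewrite Rabs_Ropp. auto. Qed.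

Lemma mcont_mult n F G y : mcont n F y -> mcont n G y -> mcont n (fun x => F x * G x) y.
Proof. intros HF HG eps He.
  set (a := Rabs (F y)). set (b := Rabs (G y)).
  assert (Ha : 0 <= a) by apply Rabs_pos. assert (Hb : 0 <= b) by apply Rabs_pos.
  set (e1 := Rmin 1 (eps / (2 * (b + 1)))). set (e2 := eps / (2 * (a + 2))).
  assert (He1 : 0 < e1). { unfold e1. apply Rmin_glb_lt. lra. apply Rdiv_lt_0_compat; lra. }
  assert (He2 : 0 < e2) by (apply Rdiv_lt_0_compat; lra).
  apply (Ev_impl _ _ (Ev_and _ _ (HF e1 He1) (HG e2 He2))).
  intros t Ht [H1 H2] x Hx. specialize (H1 x Hx). specialize (H2 x Hx).
  replace (F x * G x - F y * G y) with ((F x - F y) * G y + F x * (G x - G y)) by ring.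
  eapply Rle_trans. apply Rabs_triang. rewrite !Rabs_mult.
  assert (e1 <= 1) by apply Rmin_l. assert (e1 <= eps / (2 * (b+1))) by apply Rmin_r.
  assert (Rabs (F x) <= a + 1).
  { replace (F x) with (F y + (F x - F y)) by ring. eapply Rle_trans. apply Rabs_triang. unfold a; lra. }
  assert (Rabs (F x - F y) * Rabs (G y) <= eps / 2).
  { apply Rle_trans with (eps / (2 * (b+1)) * (b + 1)).
    apply Rmult_le_compat; try apply Rabs_pos; unfold b in *; lra.
    apply Req_le. field. lra. }
  assert (Rabs (F x) * Rabs (G x - G y) <= eps / 2).
  { apply Rle_trans with ((a + 2) * e2).
    apply Rmult_le_compat; try apply Rabs_pos; lra.
    unfold e2. apply Req_le. field. lra. }
  lra. Qed.

Lemma mcont_minus n F G y : mcont n F y -> mcont n G y -> mcont n (fun x => F x - G x) y.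
Proof. intros. apply (mcont_plus n F (fun x => - G x)); auto. apply mcont_opp; auto. Qed.

Lemma mcont_xupd n F k a y : mcont n F (xupd y k a) -> mcont n (fun x => F (xupd x k a)) y.
Proof. intros HF eps He. apply (Ev_impl _ _ (HF eps He)). intros t Ht H x Hx.
  apply H. intros j Hj. unfold xupd. destruct (Nat.eqb j k).
  replace (a - a) with 0 by ring. rewrite Rabs_R0. specialize (Hx j Hj). pose proof (Rabs_pos (x j - y j)). lra.
  auto. Qed.

Lemma mle_cont n m : forall i f y, (i + m <= n)%nat -> mcont n (mle i m f) y.
Proof. induction m; intros i f y Hm; simpl.
  - apply mcont_const.
  - apply mcont_plus; apply mcont_mult.
    + apply mcont_coord; lia.
    + apply IHm; lia.
    + apply mcont_minus. apply mcont_const. apply mcont_coord; lia.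
    + apply IHm; lia. Qed.

Lemma U_cont n u y : mcont n (U n u) y.
Proof. unfold U. apply mle_cont. lia. Qed.

Lemma part_cont n F k y : (forall z, mcont n F z) -> mcont n (part k F) y.
Proof. intros HF. unfold part. apply mcont_minus; apply mcont_xupd; apply HF. Qed.

Lemma exp_le x y : x <= y -> exp x <= exp y.
Proof. intros [H|H]. apply Rlt_le, exp_increasing; auto. subst; lra. Qed.

Lemma Rdiv_le_0_compat a b : 0 <= a -> 0 < b -> 0 <= a / b.
Proof. intros. unfold Rdiv. apply Rmult_le_pos; auto. apply Rlt_le, Rinv_0_lt_compat; auto. Qed.

Definition sig t := / (1 + exp (- t)).
Definition lg p := ln p - ln (1 - p).

Lemma sig_pos t : 0 < sig t < 1.
Proof. unfold sig. pose proof (exp_pos (-t)). split.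
  apply Rinv_0_lt_compat; lra.
  rewrite <- Rinv_1. apply Rinv_lt_contravar; lra. Qed.

Lemma sig_neg t : sig (- t) = 1 - sig t.
Proof. unfold sig. rewrite Ropp_involutive. pose proof (exp_pos t).
  rewrite exp_Ropp. field. lra. Qed.

Lemma one_minus_exp u : 0 <= u -> 1 - exp (- u) <= u.
Proof. intros. pose proof (exp_ineq1_le (- u)). lra. Qed.

Lemma exp_diff_le t t' T : T <= t' -> t' <= t -> exp (- t') - exp (- t) <= exp (- T) * (t - t').
Proof. intros H1 H2.
  replace (exp (- t)) with (exp (- t') * exp (- (t - t'))) by (rewrite <- exp_plus; f_equal; ring).
  pose proof (one_minus_exp (t - t') ltac:(lra)).
  assert (exp (- t') <= exp (- T)) by (apply exp_le; lra).
  pose proof (exp_pos (- t')). pose proof (exp_pos (- (t - t'))).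
  apply Rle_trans with (exp (- t') * (t - t')). nra. apply Rmult_le_compat_r; lra. Qed.

Lemma sig_diff t t' : sig t - sig t' = (exp (- t') - exp (- t)) / ((1 + exp (- t)) * (1 + exp (- t'))).
Proof. unfold sig. pose proof (exp_pos (-t)). pose proof (exp_pos (-t')). field. lra. Qed.

Lemma sig_lip_T t t' T : T <= t -> T <= t' -> Rabs (sig t - sig t') <= exp (- T) * Rabs (t - t').
Proof. intros H1 H2. rewrite sig_diff. pose proof (exp_pos (-t)). pose proof (exp_pos (-t')).
  pose proof (exp_pos (-T)).
  assert (HD : 1 <= (1 + exp (- t)) * (1 + exp (- t'))) by nra.
  unfold Rdiv. rewrite Rabs_mult. rewrite Rabs_inv. rewrite (Rabs_right ((1 + exp (- t)) * (1 + exp (- t')))) by lra.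
  assert (Hi : 0 < / ((1 + exp (- t)) * (1 + exp (- t'))) <= 1).
  { split. apply Rinv_0_lt_compat; lra. rewrite <- Rinv_1. apply Rinv_le_contravar; lra. }
  assert (Rabs (exp (- t') - exp (- t)) <= exp (- T) * Rabs (t - t')).
  { destruct (Rle_dec t' t).
    - rewrite Rabs_right. rewrite (Rabs_right (t - t')) by lra. apply exp_diff_le; lra.
      assert (exp (- t) <= exp (- t')) by (apply exp_le; lra). lra.
    - rewrite Rabs_left1. rewrite (Rabs_left1 (t - t')) by lra.
      pose proof (exp_diff_le t' t T). lra.
      assert (exp (- t') <= exp (- t)) by (apply exp_le; lra). lra. }
  pose proof (Rabs_pos (exp (- t') - exp (- t))). nra. Qed.

Lemma sig_lip t t' : Rabs (sig t - sig t') <= Rabs (t - t').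
Proof. rewrite sig_diff. pose proof (exp_pos (-t)). pose proof (exp_pos (-t')).
  destruct (Rle_dec t' t).
  - pose proof (exp_diff_le t t' t' ltac:(lra) r).
    assert (exp (- t) <= exp (- t')) by (apply exp_le; lra).
    rewrite Rabs_right. rewrite (Rabs_right (t - t')) by lra.
    apply Rle_trans with ((exp (- t') - exp (- t)) / (1 + exp (- t'))).
    unfold Rdiv. apply Rmult_le_compat_l. lra. apply Rinv_le_contravar; nra.
    apply Rle_trans with (exp (- t') * (t - t') / (1 + exp (- t'))).
    unfold Rdiv. apply Rmult_le_compat_r. apply Rlt_le, Rinv_0_lt_compat; lra. lra.
    apply Rmult_le_reg_r with (1 + exp (- t')). lra. field_simplify; nra.
    apply Rle_ge. apply Rdiv_le_0_compat; nra.
  - pose proof (exp_diff_le t' t t ltac:(lra) ltac:(lra)).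
    assert (exp (- t') <= exp (- t)) by (apply exp_le; lra).
    rewrite Rabs_left1. rewrite (Rabs_left1 (t - t')) by lra.
    apply Rle_trans with ((exp (- t) - exp (- t')) / (1 + exp (- t))).
    replace (- ((exp (- t') - exp (- t)) / ((1 + exp (- t)) * (1 + exp (- t')))))
      with ((exp (- t) - exp (- t')) / ((1 + exp (- t)) * (1 + exp (- t')))) by (field; lra).
    unfold Rdiv. apply Rmult_le_compat_l. lra. apply Rinv_le_contravar; nra.
    apply Rle_trans with (exp (- t) * (t' - t) / (1 + exp (- t))).
    unfold Rdiv. apply Rmult_le_compat_r. apply Rlt_le, Rinv_0_lt_compat; lra. lra.
    apply Rmult_le_reg_r with (1 + exp (- t)). lra. field_simplify; nra.
    apply Rmult_le_reg_r with ((1 + exp (- t)) * (1 + exp (- t'))). nra.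
    field_simplify; nra. Qed.

Lemma sig_one t T : T <= t -> 0 < 1 - sig t <= exp (- T).
Proof. intros H. rewrite <- sig_neg. unfold sig. rewrite Ropp_involutive.
  pose proof (exp_pos t). pose proof (exp_pos (-T)). split. apply Rinv_0_lt_compat; lra.
  assert (exp t * exp (- t) = 1) by (rewrite <- exp_plus; replace (t + - t) with 0 by ring; apply exp_0).
  assert (exp (- t) <= exp (- T)) by (apply exp_le; lra). pose proof (exp_pos (-t)).
  apply Rle_trans with (exp (- t)); auto.
  apply Rmult_le_reg_r with (1 + exp t). lra. rewrite Rinv_l by lra. nra. Qed.

Lemma sig_mono t t' : t <= t' -> sig t <= sig t'.
Proof. intros. unfold sig. assert (exp (- t') <= exp (- t)) by (apply exp_le; lra).
  pose proof (exp_pos (-t')). apply Rinv_le_contravar; lra. Qed.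

Lemma exp_small d l : 0 < d -> 0 < l -> exp (- (d / l)) <= l / d.
Proof. intros. pose proof (exp_ineq1_le (d / l)).
  assert (exp (d / l) * exp (- (d / l)) = 1) by (rewrite <- exp_plus; replace (d/l + - (d/l)) with 0 by ring; apply exp_0).
  pose proof (exp_pos (- (d/l))).
  assert (0 < d / l) by (apply Rdiv_lt_0_compat; auto).
  apply Rle_trans with (/ (d / l)).
  apply Rmult_le_reg_l with (d / l). auto. rewrite Rinv_r by lra. nra.
  apply Req_le. field. lra. Qed.

Lemma exp_small2 d l : 0 < d -> 0 < l -> exp (- (d / l)) / l <= 4 * l / (d * d).
Proof. intros. set (v := d / l). assert (0 < v) by (apply Rdiv_lt_0_compat; auto).
  pose proof (exp_ineq1_le (v / 2)).
  assert (exp v = exp (v/2) * exp (v/2)) by (rewrite <- exp_plus; f_equal; field).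
  assert (exp v * exp (- v) = 1) by (rewrite <- exp_plus; replace (v + - v) with 0 by ring; apply exp_0).
  assert (v * v / 4 <= exp v) by nra.
  pose proof (exp_pos (-v)).
  assert (exp (- v) <= 4 / (v * v)).
  { apply Rmult_le_reg_l with (v * v / 4). nra. field_simplify; try lra. nra. }
  apply Rle_trans with (4 / (v * v) / l). unfold Rdiv. apply Rmult_le_compat_r.
  apply Rlt_le, Rinv_0_lt_compat; auto. unfold Rdiv in H4; lra.
  unfold v. apply Req_le. field. lra. Qed.

Lemma ln_le_sub1 x : 0 < x -> ln x <= x - 1.
Proof. intros. pose proof (exp_ineq1_le (x - 1)).
  destruct (Rle_dec (ln x) (x - 1)); auto. exfalso.
  assert (exp (x - 1) < exp (ln x)) by (apply exp_increasing; lra). rewrite exp_ln in H1 by auto. lra. Qed.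

Lemma ln_lip a b c : 0 < c -> c <= a -> c <= b -> Rabs (ln a - ln b) <= Rabs (a - b) / c.
Proof. intros.
  assert (forall p q, c <= p -> c <= q -> ln p - ln q <= Rabs (p - q) / c).
  { intros p q Hp Hq. replace (ln p - ln q) with (ln (p / q)).
    apply Rle_trans with (p / q - 1). apply ln_le_sub1. apply Rdiv_lt_0_compat; lra.
    replace (p / q - 1) with ((p - q) / q) by (field; lra).
    destruct (Rle_dec q p).
    - rewrite Rabs_right by lra. unfold Rdiv. apply Rmult_le_compat_l. lra.
      apply Rinv_le_contravar; lra.
    - apply Rle_trans with 0. apply Rmult_le_reg_r with q. lra. field_simplify; lra.
      apply Rdiv_le_0_compat. apply Rabs_pos. lra.
    - unfold Rdiv. rewrite ln_mult, ln_Rinv; try lra. apply Rinv_0_lt_compat; lra. }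
  unfold Rabs at 1. destruct (Rcase_abs (ln a - ln b)).
  - rewrite <- Rabs_Ropp. replace (- (a - b)) with (b - a) by ring. pose proof (H2 b a H1 H0). lra.
  - apply H2; auto. Qed.

Lemma lg_lip p p' c : 0 < c -> c <= p <= 1 - c -> c <= p' <= 1 - c ->
  Rabs (lg p - lg p') <= 2 / c * Rabs (p - p').
Proof. intros. unfold lg.
  replace (ln p - ln (1 - p) - (ln p' - ln (1 - p'))) with ((ln p - ln p') - (ln (1 - p) - ln (1 - p'))) by ring.
  unfold Rminus at 1. eapply Rle_trans. apply Rabs_triang. rewrite Rabs_Ropp.
  pose proof (ln_lip p p' c H ltac:(lra) ltac:(lra)).
  pose proof (ln_lip (1 - p) (1 - p') c H ltac:(lra) ltac:(lra)).
  replace (1 - p - (1 - p')) with (- (p - p')) in H3 by ring. rewrite Rabs_Ropp in H3.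
  assert (Rabs (p - p') / c = / c * Rabs (p - p')) by (unfold Rdiv; ring).
  assert (2 / c * Rabs (p - p') = 2 * (/ c * Rabs (p - p'))) by (unfold Rdiv; ring). lra. Qed.

Lemma lg_sig t : lg (sig t) = t.
Proof. pose proof (sig_pos t). unfold lg. rewrite <- sig_neg.
  unfold sig. rewrite Ropp_involutive. pose proof (exp_pos t). pose proof (exp_pos (-t)).
  rewrite !ln_Rinv by lra. rewrite exp_Ropp.
  replace (1 + / exp t) with ((1 + exp t) / exp t) by (field; lra).
  unfold Rdiv. rewrite ln_mult, ln_Rinv, ln_exp; try lra. apply Rinv_0_lt_compat; lra. Qed.

Lemma sig_lg p : 0 < p < 1 -> sig (lg p) = p.
Proof. intros H. unfold sig, lg.
  replace (- (ln p - ln (1 - p))) with (ln ((1 - p) / p)).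
  rewrite exp_ln. field. split; lra. apply Rdiv_lt_0_compat; lra.
  unfold Rdiv. rewrite ln_mult, ln_Rinv; try lra. apply Rinv_0_lt_compat; lra. Qed.

Lemma sig_lg_iff p t : 0 < p < 1 -> (p = sig t <-> lg p = t).
Proof. intros H. split; intro E. subst. apply lg_sig. subst. rewrite sig_lg; auto. Qed.

Lemma BR_sig n u l x i : 0 < l -> BR n u l x i = sig (part i (U n u) x / l).
Proof. intros Hl. unfold BR, sig, part.
  set (a := U n u (xupd x i 1) / l). set (b := U n u (xupd x i 0) / l).
  replace ((U n u (xupd x i 1) - U n u (xupd x i 0)) / l) with (a - b) by (unfold a, b; field; lra).
  pose proof (exp_pos a). pose proof (exp_pos b).
  replace (exp (- (a - b))) with (exp b / exp a).
  field. split; lra.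
  replace (- (a - b)) with (b + - a) by ring. rewrite exp_plus, exp_Ropp. auto. Qed.

Definition D n u i x := part i (U n u) x.
Definition DD n u k j x := part j (D n u k) x.

Lemma D_aff n u k : Aff n (D n u k).
Proof. apply part_aff, U_aff. Qed.
Lemma D_dep n u k : Dep n (D n u k).
Proof. apply part_dep, U_dep. Qed.
Lemma D_cont n u k y : mcont n (D n u k) y.
Proof. apply part_cont. intro; apply U_cont. Qed.
Lemma DD_cont n u k j y : mcont n (DD n u k j) y.
Proof. apply part_cont. intro; apply D_cont. Qed.

Lemma U_split n u x i t : (i < n)%nat -> U n u (xupd x i t) = U n u (xupd x i 0) + t * D n u i x.
Proof. intros. rewrite (U_aff n u x i t H). unfold D, part. auto. Qed.

Lemma NE_cond n u x i t : NE n u x -> (i < n)%nat -> 0 <= t <= 1 -> t * D n u i x <= x i * D n u i x.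
Proof. intros [HD HN] Hi Ht. specialize (HN i Hi t Ht).
  rewrite U_split in HN by auto. rewrite (aff_full n (U n u) x i (U_aff n u) Hi) in HN.
  unfold D in *. lra. Qed.

Lemma NE_mix n u x i : NE n u x -> (i < n)%nat -> 0 < x i < 1 -> D n u i x = 0.
Proof. intros HN Hi Hx. pose proof (NE_cond n u x i 0 HN Hi ltac:(lra)).
  pose proof (NE_cond n u x i 1 HN Hi ltac:(lra)). nra. Qed.

Lemma NE_pos n u x i : NE n u x -> (i < n)%nat -> 0 < D n u i x -> x i = 1.
Proof. intros HN Hi Hd. pose proof (NE_cond n u x i 1 HN Hi ltac:(lra)).
  destruct HN as [HD _]. destruct (HD i) as [H1 _]. specialize (H1 Hi). nra. Qed.

Lemma NE_neg n u x i : NE n u x -> (i < n)%nat -> D n u i x < 0 -> x i = 0.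
Proof. intros HN Hi Hd. pose proof (NE_cond n u x i 0 HN Hi ltac:(lra)).
  destruct HN as [HD _]. destruct (HD i) as [H1 _]. specialize (H1 Hi). nra. Qed.

Lemma NE_intro n u x : Delta_set n x ->
  (forall i, (i < n)%nat -> (0 < D n u i x -> x i = 1) /\ (D n u i x < 0 -> x i = 0)) -> NE n u x.
Proof. intros HD H. split; auto. intros i Hi t Ht.
  rewrite U_split by auto. rewrite (aff_full n (U n u) x i (U_aff n u) Hi).
  fold (D n u i x). destruct (H i Hi) as [H1 H2].
  destruct (Rtotal_order (D n u i x) 0) as [Hl|[He|Hg]].
  - rewrite (H2 Hl). nra.
  - rewrite He. lra.
  - rewrite (H1 Hg). nra. Qed.

Lemma ND_iff n u l x : 0 < l ->
  (ND n u l x <-> Delta_set n x /\ forall i, (i < n)%nat -> x i = sig (D n u i x / l)).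
Proof. intros Hl. unfold ND. split; intros [H1 H2]; split; auto; intros i Hi;
  rewrite (H2 i Hi) at 1; rewrite ?BR_sig; unfold D; auto. Qed.

Lemma affine_deriv a b x : derivable_pt_lim (fun s => a + s * b) x b.
Proof. intros eps He. exists (mkposreal 1 ltac:(lra)). intros h Hh _.
  replace ((a + (x + h) * b - (a + x * b)) / h - b) with 0 by (field; auto).
  rewrite Rabs_R0; auto. Qed.

Lemma hess_id n u x i j h : (i < n)%nat -> (j < n)%nat -> is_hess n u x i j h -> h = DD n u i j x.
Proof. intros Hi Hj [g [Hg Hh]].
  assert (Eg : forall t, g t = D n u i (xupd x j t)).
  { intro t. specialize (Hg t).
    assert (E : (fun s => U n u (xupd (xupd x j t) i s)) =
                (fun s => U n u (xupd (xupd x j t) i 0) + s * D n u i (xupd x j t))).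
    { apply functional_extensionality; intro s. apply U_split; auto. }
    rewrite E in Hg. eapply uniqueness_limite. apply Hg. apply affine_deriv. }
  assert (E2 : g = fun t => D n u i (xupd x j 0) + t * DD n u i j x).
  { apply functional_extensionality; intro t. rewrite Eg. unfold DD.
    rewrite (D_aff n u i x j t Hj). unfold part. auto. }
  rewrite E2 in Hh. eapply uniqueness_limite. apply Hh. apply affine_deriv. Qed.

Definition ismix (y : nat -> R) i : bool :=
  if Rlt_dec 0 (y i) then if Rlt_dec (y i) 1 then true else false else false.
Definition mx y i : R := if ismix y i then 1 else 0.

Lemma ismix_iff y i : ismix y i = true <-> mixing y i.
Proof. unfold ismix, mixing. destruct (Rlt_dec 0 (y i)); destruct (Rlt_dec (y i) 1); split; intros; try discriminate; auto; lra. Qed.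

Lemma ismix_false y i : ismix y i = false -> ~ mixing y i.
Proof. intros H C. apply ismix_iff in C. congruence. Qed.

Definition Phi n u y (G : nat -> nat -> R) l (x : nat -> R) i :=
  x i - sum_lt n (fun k => mx y k * G i k * (D n u k x - l * lg (x k))).

Definition T n u y G l (x : nat -> R) i : R :=
  if Nat.ltb i n then (if ismix y i then Phi n u y G l x i else sig (D n u i x / l)) else 0.

Definition wt y K i : R := if ismix y i then 1 else K.

Definition Bd n y K r (v : nat -> R) := forall i, (i < n)%nat -> wt y K i * Rabs (v i) <= r.

Definition vsub (x x' : nat -> R) i := x i - x' i.

Record Loc n u y G g eps Cb dd rho Lg Cl K : Prop := {
  L_NE : NE n u y;
  L_GH : forall i j, (i < n)%nat -> (j < n)%nat -> ismix y i = true -> ismix y j = true ->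
     sum_lt n (fun k => mx y k * (G i k * DD n u k j y)) = if Nat.eqb i j then 1 else 0;
  L_HG : forall i j, (i < n)%nat -> (j < n)%nat -> ismix y i = true -> ismix y j = true ->
     sum_lt n (fun k => mx y k * (DD n u i k y * G k j)) = if Nat.eqb i j then 1 else 0;
  L_g0 : 0 <= g;
  L_g : forall i k, (i < n)%nat -> (k < n)%nat -> Rabs (G i k) <= g;
  L_rho : 0 < rho;
  L_K : 1 <= K;
  L_eps0 : 0 <= eps;
  L_eps : forall z, near n y z rho -> forall k j, (k < n)%nat -> (j < n)%nat ->
     Rabs (DD n u k j z - DD n u k j y) <= eps;
  L_Cb0 : 0 <= Cb;
  L_Cb : forall z, near n y z rho -> forall k j, (k < n)%nat -> (j < n)%nat -> Rabs (DD n u k j z) <= Cb;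
  L_dd0 : 0 < dd;
  L_dd : forall i, (i < n)%nat -> ismix y i = false -> forall z, near n y z rho ->
     (y i = 1 /\ dd <= D n u i z) \/ (y i = 0 /\ D n u i z <= - dd);
  L_marg : forall k, (k < n)%nat -> ismix y k = true -> forall p, Rabs (p - y k) <= rho -> 0 < p < 1;
  L_Lg0 : 0 <= Lg;
  L_Lg : forall k, (k < n)%nat -> ismix y k = true -> forall p p', Rabs (p - y k) <= rho ->
     Rabs (p' - y k) <= rho -> Rabs (lg p - lg p') <= Lg * Rabs (p - p');
  L_Cl0 : 0 <= Cl;
  L_Cl : forall k, (k < n)%nat -> ismix y k = true -> Rabs (lg (y k)) <= Cl;
  L_small : INR n * INR n * g * (eps + Cb / K) <= 1/4
}.

Definition Lam n g dd rho Lg Cl K Cb l :=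
  0 < l /\ INR n * g * l * Lg <= 1/4 /\ K * (4 * l / (dd * dd)) * INR n * Cb <= 1/2 /\
  l * (INR n * g * Cl + K / dd) <= rho / 2.

Definition box n y K rho x := Bd n y K rho (vsub x y) /\ forall i, (n <= i)%nat -> x i = 0.

Lemma wt_ge1 y K i : 1 <= K -> 1 <= wt y K i.
Proof. unfold wt; destruct (ismix y i); lra. Qed.

Lemma Bd_near n y K r v : 1 <= K -> Bd n y K r v -> forall j, (j < n)%nat -> Rabs (v j) <= r.
Proof. intros HK H j Hj. specialize (H j Hj). pose proof (wt_ge1 y K j HK).
  pose proof (Rabs_pos (v j)). nra. Qed.

Lemma box_near n y K rho x : 1 <= K -> box n y K rho x -> near n y x rho.
Proof. intros HK [H _] j Hj. apply (Bd_near n y K rho (vsub x y) HK H j Hj). Qed.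

Lemma hyb_near n y x x' r j : near n y x r -> near n y x' r -> near n y (hyb j x x') r.
Proof. intros H1 H2 k Hk. unfold hyb. destruct (Nat.ltb k j); auto. Qed.

Lemma mx_01 y k : mx y k = 0 \/ mx y k = 1.
Proof. unfold mx; destruct (ismix y k); auto. Qed.

Lemma sum_swap_scal n m (a : nat -> R) (b : nat -> R) (E : nat -> nat -> R) :
  sum_lt n (fun k => a k * sum_lt m (fun j => b j * E k j)) =
  sum_lt m (fun j => b j * sum_lt n (fun k => a k * E k j)).
Proof.
  transitivity (sum_lt n (fun k => sum_lt m (fun j => a k * (b j * E k j)))).
  apply sum_lt_ext; intros; rewrite <- sum_lt_scal; auto.
  rewrite sum_lt_exch. apply sum_lt_ext; intros. rewrite <- sum_lt_scal.
  apply sum_lt_ext; intros. ring. Qed.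

Lemma Phi_diff n u y G l x x' i :
  (forall i j, (i < n)%nat -> (j < n)%nat -> ismix y i = true -> ismix y j = true ->
     sum_lt n (fun k => mx y k * (G i k * DD n u k j y)) = if Nat.eqb i j then 1 else 0) ->
  (i < n)%nat -> ismix y i = true ->
  Phi n u y G l x i - Phi n u y G l x' i =
  sum_lt n (fun j => vsub x x' j * sum_lt n (fun k => mx y k * G i k *
      (mx y j * DD n u k j y - DD n u k j (hyb j x x'))))
  + l * sum_lt n (fun k => mx y k * G i k * (lg (x k) - lg (x' k))).
Proof. intros HGH Hi Hmi. unfold Phi.
  set (a := fun k => mx y k * G i k).
  assert (E1 : sum_lt n (fun k => mx y k * G i k * (D n u k x - l * lg (x k))) -
               sum_lt n (fun k => mx y k * G i k * (D n u k x' - l * lg (x' k))) =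
               sum_lt n (fun k => a k * (D n u k x - D n u k x')) -
               l * sum_lt n (fun k => mx y k * G i k * (lg (x k) - lg (x' k)))).
  { rewrite <- sum_lt_minus, <- sum_lt_scal, <- sum_lt_minus. apply sum_lt_ext; intros.
    unfold a. ring. }
  assert (E2 : sum_lt n (fun k => a k * (D n u k x - D n u k x')) =
               sum_lt n (fun j => vsub x x' j * sum_lt n (fun k => a k * DD n u k j (hyb j x x')))).
  { rewrite <- sum_swap_scal. apply sum_lt_ext; intros k Hk. f_equal.
    rewrite (telescope n (D n u k) x x' (D_aff n u k) (D_dep n u k)). auto. }
  assert (E3 : sum_lt n (fun j => vsub x x' j * sum_lt n (fun k => a k * (mx y j * DD n u k j y))) = vsub x x' i).
  { transitivity (sum_lt n (fun j => (if Nat.eqb i j then 1 else 0) * vsub x x' j)).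
    - apply sum_lt_ext; intros j Hj. assert (Mj : mx y j = if ismix y j then 1 else 0) by reflexivity.
      rewrite Mj. destruct (ismix y j) eqn:Ej.
      + rewrite <- (HGH i j Hi Hj Hmi Ej). rewrite Rmult_comm. f_equal. apply sum_lt_ext; intros.
        unfold a. ring.
      + rewrite sum_lt_zero. destruct (Nat.eqb_spec i j). subst. congruence. ring.
        intros. ring.
    - apply sum_lt_delta; auto. }
  assert (E4 : sum_lt n (fun j => vsub x x' j * sum_lt n (fun k => mx y k * G i k *
      (mx y j * DD n u k j y - DD n u k j (hyb j x x')))) =
      sum_lt n (fun j => vsub x x' j * sum_lt n (fun k => a k * (mx y j * DD n u k j y))) -
      sum_lt n (fun j => vsub x x' j * sum_lt n (fun k => a k * DD n u k j (hyb j x x')))).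
  { rewrite <- sum_lt_minus. apply sum_lt_ext; intros. rewrite <- Rmult_minus_distr_l. f_equal.
    rewrite <- sum_lt_minus. apply sum_lt_ext; intros. unfold a. ring. }
  rewrite E4, E3, <- E2. unfold vsub in *. lra. Qed.

Lemma mxG_bound y (Gik Z g : R) k : Rabs Gik <= g -> Rabs (mx y k * Gik * Z) <= g * Rabs Z.
Proof. intros H. rewrite !Rabs_mult. destruct (mx_01 y k) as [E|E]; rewrite E.
  rewrite Rabs_R0. pose proof (Rabs_pos Z). pose proof (Rabs_pos Gik). nra.
  rewrite Rabs_R1. pose proof (Rabs_pos Z). nra. Qed.

Lemma sum_bound n f c : (forall k, (k < n)%nat -> Rabs (f k) <= c) -> Rabs (sum_lt n f) <= INR n * c.
Proof. intros H. eapply Rle_trans. apply sum_lt_abs. rewrite <- sum_lt_const. apply sum_lt_le; auto. Qed.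

Lemma Phi_est n u y G g eps Cb dd rho Lg Cl K l x x' r i :
  Loc n u y G g eps Cb dd rho Lg Cl K -> 0 <= l ->
  near n y x rho -> near n y x' rho -> 0 <= r -> Bd n y K r (vsub x x') ->
  (i < n)%nat -> ismix y i = true ->
  Rabs (Phi n u y G l x i - Phi n u y G l x' i) <=
    r * (INR n * INR n * g * (eps + Cb / K) + INR n * g * l * Lg).
Proof. intros HL Hl Hx Hx' Hr HB Hi Hmi.
  rewrite (Phi_diff n u y G l x x' i (L_GH _ _ _ _ _ _ _ _ _ _ _ _ HL) Hi Hmi).
  pose proof (L_K _ _ _ _ _ _ _ _ _ _ _ _ HL) as HK.
  pose proof (L_g0 _ _ _ _ _ _ _ _ _ _ _ _ HL) as Hg0.
  pose proof (L_eps0 _ _ _ _ _ _ _ _ _ _ _ _ HL) as He0.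
  pose proof (L_Cb0 _ _ _ _ _ _ _ _ _ _ _ _ HL) as HC0.
  pose proof (L_Lg0 _ _ _ _ _ _ _ _ _ _ _ _ HL) as HLg0.
  assert (HCK : 0 <= Cb / K) by (apply Rdiv_le_0_compat; lra).
  assert (A1 : Rabs (sum_lt n (fun j => vsub x x' j * sum_lt n (fun k => mx y k * G i k *
      (mx y j * DD n u k j y - DD n u k j (hyb j x x'))))) <= INR n * (r * (INR n * g * (eps + Cb / K)))).
  { apply sum_bound. intros j Hj. rewrite Rabs_mult.
    assert (Hn : 0 <= INR n) by apply pos_INR.
    specialize (HB j Hj). assert (Mj : mx y j = if ismix y j then 1 else 0) by reflexivity.
    rewrite Mj. unfold wt in HB. destruct (ismix y j) eqn:Ej.
    - assert (Rabs (sum_lt n (fun k => mx y k * G i k * (1 * DD n u k j y - DD n u k j (hyb j x x')))) <= INR n * (g * eps)).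
      { apply sum_bound. intros k Hk. eapply Rle_trans. apply mxG_bound. apply (L_g _ _ _ _ _ _ _ _ _ _ _ _ HL); auto.
        apply Rmult_le_compat_l; auto. rewrite Rmult_1_l, <- Rabs_Ropp.
        replace (- (DD n u k j y - DD n u k j (hyb j x x'))) with (DD n u k j (hyb j x x') - DD n u k j y) by ring.
        apply (L_eps _ _ _ _ _ _ _ _ _ _ _ _ HL); auto. apply hyb_near; auto. }
      pose proof (Rabs_pos (vsub x x' j)).
      apply Rle_trans with (r * (INR n * (g * eps))). apply Rmult_le_compat; try apply Rabs_pos; lra.
      apply Rmult_le_compat_l; auto. assert (0 <= INR n * g * (Cb / K)) by (apply Rmult_le_pos; [apply Rmult_le_pos|]; auto). lra.
    - assert (Rabs (sum_lt n (fun k => mx y k * G i k * (0 * DD n u k j y - DD n u k j (hyb j x x')))) <= INR n * (g * Cb)).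
      { apply sum_bound. intros k Hk. eapply Rle_trans. apply mxG_bound. apply (L_g _ _ _ _ _ _ _ _ _ _ _ _ HL); auto.
        apply Rmult_le_compat_l; auto. replace (0 * DD n u k j y - DD n u k j (hyb j x x')) with (- DD n u k j (hyb j x x')) by ring.
        rewrite Rabs_Ropp. apply (L_Cb _ _ _ _ _ _ _ _ _ _ _ _ HL); auto. apply hyb_near; auto. }
      pose proof (Rabs_pos (vsub x x' j)).
      assert (Rabs (vsub x x' j) <= r / K).
      { apply Rmult_le_reg_l with K. lra. replace (K * (r / K)) with r by (field; lra). lra. }
      apply Rle_trans with (r / K * (INR n * (g * Cb))). apply Rmult_le_compat; try apply Rabs_pos; lra.
      replace (r / K * (INR n * (g * Cb))) with (r * (INR n * g * (Cb / K))) by (field; lra).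
      apply Rmult_le_compat_l; auto. apply Rmult_le_compat_l. nra. lra. }
  assert (A2 : Rabs (l * sum_lt n (fun k => mx y k * G i k * (lg (x k) - lg (x' k)))) <= l * (INR n * (g * (Lg * r)))).
  { rewrite Rabs_mult, (Rabs_right l) by lra. apply Rmult_le_compat_l; auto.
    apply sum_bound. intros k Hk. assert (Mk : mx y k = if ismix y k then 1 else 0) by reflexivity.
    destruct (ismix y k) eqn:Ek.
    - eapply Rle_trans. apply mxG_bound. apply (L_g _ _ _ _ _ _ _ _ _ _ _ _ HL); auto.
      apply Rmult_le_compat_l; auto. eapply Rle_trans. apply (L_Lg _ _ _ _ _ _ _ _ _ _ _ _ HL k Hk Ek); [apply Hx; auto|apply Hx'; auto].
      apply Rmult_le_compat_l; auto. specialize (HB k Hk). unfold wt in HB. rewrite Ek in HB. unfold vsub in HB. lra.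
    - rewrite Mk. rewrite !Rmult_0_l, Rabs_R0. apply Rmult_le_pos; auto. apply Rmult_le_pos; auto. }
  eapply Rle_trans. apply Rabs_triang.
  assert (Hn : 0 <= INR n) by apply pos_INR.
  apply Rle_trans with (INR n * (r * (INR n * g * (eps + Cb / K))) + l * (INR n * (g * (Lg * r)))). lra.
  apply Req_le. ring. Qed.

Lemma D_diff_bound n u y G g eps Cb dd rho Lg Cl K x x' r i :
  Loc n u y G g eps Cb dd rho Lg Cl K ->
  near n y x rho -> near n y x' rho -> 0 <= r -> Bd n y K r (vsub x x') -> (i < n)%nat ->
  Rabs (D n u i x - D n u i x') <= INR n * (r * Cb).
Proof. intros HL Hx Hx' Hr HB Hi.
  rewrite (telescope n (D n u i) x x' (D_aff n u i) (D_dep n u i)).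
  apply sum_bound. intros j Hj. rewrite Rabs_mult.
  apply Rmult_le_compat; try apply Rabs_pos.
  apply (Bd_near n y K r (vsub x x') (L_K _ _ _ _ _ _ _ _ _ _ _ _ HL) HB j Hj).
  apply (L_Cb _ _ _ _ _ _ _ _ _ _ _ _ HL); auto. apply hyb_near; auto. Qed.

Lemma Psig_est n u y G g eps Cb dd rho Lg Cl K l x x' r i :
  Loc n u y G g eps Cb dd rho Lg Cl K -> 0 < l ->
  near n y x rho -> near n y x' rho -> 0 <= r -> Bd n y K r (vsub x x') ->
  (i < n)%nat -> ismix y i = false ->
  Rabs (sig (D n u i x / l) - sig (D n u i x' / l)) <= 4 * l / (dd * dd) * (INR n * (r * Cb)).
Proof. intros HL Hl Hx Hx' Hr HB Hi Hmi.
  pose proof (L_dd0 _ _ _ _ _ _ _ _ _ _ _ _ HL) as Hdd.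
  pose proof (D_diff_bound n u y G g eps Cb dd rho Lg Cl K x x' r i HL Hx Hx' Hr HB Hi) as HDB.
  assert (Key : forall t t', dd / l <= t -> dd / l <= t' ->
     Rabs (sig t - sig t') <= 4 * l / (dd * dd) * Rabs (t * l - t' * l)).
  { intros t t' H1 H2. eapply Rle_trans. apply (sig_lip_T t t' (dd / l)); auto.
    replace (t * l - t' * l) with ((t - t') * l) by ring. rewrite Rabs_mult, (Rabs_right l) by lra.
    pose proof (exp_small2 dd l Hdd Hl). pose proof (Rabs_pos (t - t')).
    apply Rle_trans with (exp (- (dd / l)) / l * (Rabs (t - t') * l)).
    apply Req_le. field. lra. apply Rmult_le_compat_r. nra. auto. }
  destruct (L_dd _ _ _ _ _ _ _ _ _ _ _ _ HL i Hi Hmi x Hx) as [[Ey Hd]|[Ey Hd]];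
  destruct (L_dd _ _ _ _ _ _ _ _ _ _ _ _ HL i Hi Hmi x' Hx') as [[Ey' Hd']|[Ey' Hd']]; try lra.
  - eapply Rle_trans. apply Key. unfold Rdiv; apply Rmult_le_compat_r; [apply Rlt_le, Rinv_0_lt_compat|]; lra.
    unfold Rdiv; apply Rmult_le_compat_r; [apply Rlt_le, Rinv_0_lt_compat|]; lra.
    replace (D n u i x / l * l - D n u i x' / l * l) with (D n u i x - D n u i x') by (field; lra).
    apply Rmult_le_compat_l; auto. apply Rdiv_le_0_compat; nra.
  - replace (sig (D n u i x / l) - sig (D n u i x' / l)) with (sig (- (D n u i x' / l)) - sig (- (D n u i x / l)))
      by (rewrite !sig_neg; ring).
    eapply Rle_trans. apply Key.
    replace (- (D n u i x' / l)) with ((- D n u i x') / l) by (field; lra).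
    unfold Rdiv; apply Rmult_le_compat_r; [apply Rlt_le, Rinv_0_lt_compat|]; lra.
    replace (- (D n u i x / l)) with ((- D n u i x) / l) by (field; lra).
    unfold Rdiv; apply Rmult_le_compat_r; [apply Rlt_le, Rinv_0_lt_compat|]; lra.
    replace (- (D n u i x' / l) * l - - (D n u i x / l) * l) with (D n u i x - D n u i x') by (field; lra).
    apply Rmult_le_compat_l; auto. apply Rdiv_le_0_compat; nra. Qed.

Lemma T_contr n u y G g eps Cb dd rho Lg Cl K l x x' r :
  Loc n u y G g eps Cb dd rho Lg Cl K -> Lam n g dd rho Lg Cl K Cb l ->
  near n y x rho -> near n y x' rho -> 0 <= r -> Bd n y K r (vsub x x') ->
  Bd n y K (r / 2) (vsub (T n u y G l x) (T n u y G l x')).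
Proof. intros HL [Hl [H1 [H2 H3]]] Hx Hx' Hr HB i Hi. unfold T, vsub, wt.
  assert (Hin : (i <? n)%nat = true) by (apply Nat.ltb_lt; auto). rewrite Hin.
  destruct (ismix y i) eqn:Ei.
  - rewrite Rmult_1_l. eapply Rle_trans. apply (Phi_est n u y G g eps Cb dd rho Lg Cl K l x x' r i HL); auto; lra.
    pose proof (L_small _ _ _ _ _ _ _ _ _ _ _ _ HL). nra.
  - eapply Rle_trans. apply Rmult_le_compat_l. pose proof (L_K _ _ _ _ _ _ _ _ _ _ _ _ HL); lra.
    apply (Psig_est n u y G g eps Cb dd rho Lg Cl K l x x' r i HL); auto.
    replace (K * (4 * l / (dd * dd) * (INR n * (r * Cb)))) with (r * (K * (4 * l / (dd * dd)) * INR n * Cb)) by ring.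
    nra. Qed.

Lemma Ty_near n u y G g eps Cb dd rho Lg Cl K l :
  Loc n u y G g eps Cb dd rho Lg Cl K -> 0 < l ->
  Bd n y K (l * (INR n * g * Cl + K / dd)) (vsub (T n u y G l y) y).
Proof. intros HL Hl i Hi. unfold T, vsub, wt.
  assert (Hin : (i <? n)%nat = true) by (apply Nat.ltb_lt; auto). rewrite Hin.
  pose proof (L_K _ _ _ _ _ _ _ _ _ _ _ _ HL) as HK.
  pose proof (L_dd0 _ _ _ _ _ _ _ _ _ _ _ _ HL) as Hdd.
  pose proof (L_g0 _ _ _ _ _ _ _ _ _ _ _ _ HL) as Hg0.
  pose proof (L_Cl0 _ _ _ _ _ _ _ _ _ _ _ _ HL) as HCl0.
  assert (Hn : 0 <= INR n) by apply pos_INR.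
  assert (HKd : 0 <= K / dd) by (apply Rdiv_le_0_compat; lra).
  assert (Hngc : 0 <= INR n * g * Cl) by (apply Rmult_le_pos; [apply Rmult_le_pos|]; auto).
  assert (Hy : near n y y rho). { intros j Hj. replace (y j - y j) with 0 by ring. rewrite Rabs_R0. pose proof (L_rho _ _ _ _ _ _ _ _ _ _ _ _ HL); lra. }
  destruct (ismix y i) eqn:Ei.
  - rewrite Rmult_1_l. unfold Phi.
    replace (y i - sum_lt n (fun k => mx y k * G i k * (D n u k y - l * lg (y k))) - y i)
      with (l * sum_lt n (fun k => mx y k * G i k * lg (y k))).
    + rewrite Rabs_mult, (Rabs_right l) by lra.
      apply Rle_trans with (l * (INR n * g * Cl)). apply Rmult_le_compat_l. lra.
      rewrite Rmult_assoc. apply sum_bound. intros k Hk.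
      assert (Mk : mx y k = if ismix y k then 1 else 0) by reflexivity.
      destruct (ismix y k) eqn:Ek.
      * eapply Rle_trans. apply mxG_bound. apply (L_g _ _ _ _ _ _ _ _ _ _ _ _ HL); auto.
        apply Rmult_le_compat_l; auto. apply (L_Cl _ _ _ _ _ _ _ _ _ _ _ _ HL); auto.
      * rewrite Mk, !Rmult_0_l, Rabs_R0. apply Rmult_le_pos; auto.
      * apply Rmult_le_compat_l; lra.
    + rewrite <- sum_lt_scal.
      assert (sum_lt n (fun k => mx y k * G i k * (D n u k y - l * lg (y k))) =
              - sum_lt n (fun k => l * (mx y k * G i k * lg (y k)))).
      { replace (- sum_lt n (fun k => l * (mx y k * G i k * lg (y k)))) with
          (sum_lt n (fun _ => 0) - sum_lt n (fun k => l * (mx y k * G i k * lg (y k)))).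
        rewrite <- sum_lt_minus. apply sum_lt_ext. intros k Hk.
        assert (Mk : mx y k = if ismix y k then 1 else 0) by reflexivity.
        destruct (ismix y k) eqn:Ek.
        - rewrite (NE_mix n u y k (L_NE _ _ _ _ _ _ _ _ _ _ _ _ HL) Hk). ring.
          apply ismix_iff in Ek. exact Ek.
        - rewrite Mk. ring.
        - rewrite sum_lt_zero; auto. ring. }
      rewrite H. ring.
  - assert (Hex : exp (- (dd / l)) <= l / dd) by (apply exp_small; auto).
    assert (Hs : Rabs (sig (D n u i y / l) - y i) <= l / dd).
    { destruct (L_dd _ _ _ _ _ _ _ _ _ _ _ _ HL i Hi Ei y Hy) as [[Ey Hd]|[Ey Hd]]; rewrite Ey.
      - pose proof (sig_one (D n u i y / l) (dd / l)).
        assert (dd / l <= D n u i y / l) by (unfold Rdiv; apply Rmult_le_compat_r; [apply Rlt_le, Rinv_0_lt_compat|]; lra).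
        specialize (H H0). rewrite Rabs_left1 by lra. lra.
      - pose proof (sig_one (- (D n u i y / l)) (dd / l)).
        assert (dd / l <= - (D n u i y / l)).
        { replace (- (D n u i y / l)) with ((- D n u i y) / l) by (field; lra).
          unfold Rdiv; apply Rmult_le_compat_r; [apply Rlt_le, Rinv_0_lt_compat|]; lra. }
        specialize (H H0). rewrite sig_neg in H. rewrite Rminus_0_r. rewrite Rabs_right by lra. lra. }
    apply Rle_trans with (K * (l / dd)). apply Rmult_le_compat_l; lra.
    replace (K * (l / dd)) with (l * (K / dd)) by (field; lra).
    apply Rmult_le_compat_l; lra. Qed.

Lemma pow2_ge k : INR k <= 2 ^ k.
Proof. induction k. simpl; lra. rewrite S_INR. simpl.
  assert (1 <= 2 ^ k) by (apply pow_R1_Rle; lra). lra. Qed.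

Lemma pow2_pos k : 0 < 2 ^ k.
Proof. apply pow_lt; lra. Qed.

Lemma lim_half a b c : 0 <= c -> (forall k, a <= b + c / 2 ^ k) -> a <= b.
Proof. intros Hc H. destruct (Rle_dec a b); auto. exfalso.
  assert (Hab : 0 < a - b) by lra.
  destruct (INR_unbounded (c / (a - b))) as [k H1].
  specialize (H k). pose proof (pow2_ge k). pose proof (pow2_pos k).
  assert (c < (a - b) * INR k).
  { apply Rmult_lt_reg_r with (/ (a - b)). apply Rinv_0_lt_compat; lra.
    replace ((a - b) * INR k * / (a - b)) with (INR k) by (field; lra). unfold Rdiv in H1. lra. }
  assert (c / 2 ^ k < a - b).
  { apply Rmult_lt_reg_r with (2 ^ k). auto. unfold Rdiv. rewrite Rmult_assoc, Rinv_l by lra. nra. }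
  lra. Qed.

Lemma Bd_tri n y K r1 r2 v1 v2 : 1 <= K -> Bd n y K r1 v1 -> Bd n y K r2 v2 -> Bd n y K (r1 + r2) (fun i => v1 i + v2 i).
Proof. intros HK H1 H2 i Hi. specialize (H1 i Hi). specialize (H2 i Hi).
  pose proof (wt_ge1 y K i HK).
  eapply Rle_trans with (wt y K i * (Rabs (v1 i) + Rabs (v2 i))).
  apply Rmult_le_compat_l. lra. apply Rabs_triang. lra. Qed.

Lemma Bd_ext n y K r v v' : (forall i, (i < n)%nat -> v i = v' i) -> Bd n y K r v -> Bd n y K r v'.
Proof. intros E H i Hi. rewrite <- E; auto. Qed.

Lemma Bd_mono n y K r r' v : r <= r' -> Bd n y K r v -> Bd n y K r' v.
Proof. intros Hr H i Hi. specialize (H i Hi). lra. Qed.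

Lemma Bd_sym n y K r x x' : Bd n y K r (vsub x x') -> Bd n y K r (vsub x' x).
Proof. intros H i Hi. unfold vsub. rewrite <- Rabs_Ropp. replace (- (x' i - x i)) with (x i - x' i) by ring. apply H; auto. Qed.

Lemma Bd_lim n y K b c v : 0 <= c -> (forall k, Bd n y K (b + c / 2 ^ k) v) -> Bd n y K b v.
Proof. intros Hc H i Hi. apply (lim_half _ _ c Hc). intro k. apply H; auto. Qed.

Lemma bd_iter n y K r0 e v : 0 <= r0 -> 0 <= e ->
  (forall r, 0 <= r -> Bd n y K r v -> Bd n y K (r / 2 + e) v) -> Bd n y K r0 v -> Bd n y K (2 * e) v.
Proof. intros Hr0 He H H0. apply (Bd_lim n y K (2 * e) r0 v Hr0). intro k.
  induction k. simpl. eapply Bd_mono; [|exact H0]. lra.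
  assert (0 <= 2 * e + r0 / 2 ^ k) by (pose proof (pow2_pos k); apply Rplus_le_le_0_compat; [lra| apply Rdiv_le_0_compat; lra]).
  eapply Bd_mono; [| apply (H _ H1 IHk)]. simpl. apply Req_le. field. pose proof (pow2_pos k). lra. Qed.

Lemma box_diff n y K rho x x' : 1 <= K -> box n y K rho x -> box n y K rho x' -> Bd n y K (2 * rho) (vsub x x').
Proof. intros HK [H1 _] [H2 _]. replace (2 * rho) with (rho + rho) by ring.
  apply (Bd_ext n y K _ (fun i => vsub x y i + vsub y x' i)).
  intros; unfold vsub; ring. apply Bd_tri; auto. apply Bd_sym; auto. Qed.

Lemma Bd0_eq n y K v : 1 <= K -> Bd n y K 0 v -> forall i, (i < n)%nat -> v i = 0.
Proof. intros HK H i Hi. pose proof (Bd_near n y K 0 v HK H i Hi). pose proof (Rabs_pos (v i)).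
  destruct (Req_dec (v i) 0); auto. pose proof (Rabs_pos_lt _ H2). lra. Qed.

Lemma fp_unique n y K rho (Tm : (nat -> R) -> (nat -> R)) z z' :
  1 <= K -> 0 < rho ->
  (forall x x' r, box n y K rho x -> box n y K rho x' -> 0 <= r -> Bd n y K r (vsub x x') ->
     Bd n y K (r / 2) (vsub (Tm x) (Tm x'))) ->
  box n y K rho z -> box n y K rho z' -> Tm z = z -> Tm z' = z' -> z = z'.
Proof. intros HK Hr HC Hz Hz' Fz Fz'.
  assert (Bd n y K (2 * 0) (vsub z z')).
  { apply (bd_iter n y K (2 * rho)). lra. lra.
    intros r Hr0 HB. rewrite Rplus_0_r. replace (vsub z z') with (vsub (Tm z) (Tm z')) by (rewrite Fz, Fz'; auto). apply HC; auto.
    apply box_diff; auto. }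
  rewrite Rmult_0_r in H. apply functional_extensionality; intro i.
  destruct (Nat.lt_ge_cases i n).
  - pose proof (Bd0_eq n y K _ HK H i H0). unfold vsub in H1. lra.
  - destruct Hz as [_ A]. destruct Hz' as [_ B]. rewrite A, B; auto. Qed.

Lemma cv_bound (un : nat -> R) l a b k : Un_cv un l -> (forall m, (k <= m)%nat -> Rabs (un m - a) <= b) -> Rabs (l - a) <= b.
Proof. intros Hc H. destruct (Rle_dec (Rabs (l - a)) b); auto. exfalso.
  destruct (Hc (Rabs (l - a) - b)) as [N HN]. lra.
  specialize (HN (max N k) ltac:(lia)). specialize (H (max N k) ltac:(lia)). unfold R_dist in HN.
  pose proof (Rabs_triang (l - un (max N k)) (un (max N k) - a)).
  replace (l - un (max N k) + (un (max N k) - a)) with (l - a) in H0 by ring.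
  rewrite <- Rabs_Ropp in HN. replace (- (un (max N k) - l)) with (l - un (max N k)) in HN by ring. lra. Qed.

Lemma fp_exists n y K rho (Tm : (nat -> R) -> (nat -> R)) :
  1 <= K -> 0 < rho -> (forall i, (n <= i)%nat -> y i = 0) ->
  (forall x x' r, box n y K rho x -> box n y K rho x' -> 0 <= r -> Bd n y K r (vsub x x') ->
     Bd n y K (r / 2) (vsub (Tm x) (Tm x'))) ->
  (forall x, box n y K rho x -> box n y K rho (Tm x)) ->
  exists z, box n y K rho z /\ Tm z = z.
Proof. intros HK Hr Hy HC HS.
  set (sq := fun k => Nat.iter k Tm y).
  assert (Hy0 : box n y K rho y).
  { split; auto. intros i Hi. unfold vsub. replace (y i - y i) with 0 by ring. rewrite Rabs_R0, Rmult_0_r. lra. }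
  assert (Ssq : forall k, sq (S k) = Tm (sq k)) by reflexivity.
  assert (S0 : sq 0%nat = y) by reflexivity. clearbody sq.
  assert (Sb : forall k, box n y K rho (sq k)).
  { induction k. rewrite S0; auto. rewrite Ssq. apply HS; auto. }
  assert (Sst : forall k, Bd n y K (2 * rho / 2 ^ k) (vsub (sq (S k)) (sq k))).
  { induction k. simpl. replace (2 * rho / 1) with (2 * rho) by field. apply box_diff; auto.
    replace (2 * rho / 2 ^ S k) with (2 * rho / 2 ^ k / 2) by (simpl; field; pose proof (pow2_pos k); lra).
    rewrite (Ssq (S k)). rewrite (Ssq k) at 2. apply HC; auto. apply Rdiv_le_0_compat. lra. apply pow2_pos. }
  assert (Scau : forall k d, Bd n y K (4 * rho / 2 ^ k - 4 * rho / 2 ^ (k + d)) (vsub (sq (k + d)%nat) (sq k))).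
  { intros k d. induction d.
    - rewrite Nat.add_0_r. intros i Hi. unfold vsub. replace (sq k i - sq k i) with 0 by ring.
      rewrite Rabs_R0. lra.
    - apply (Bd_ext n y K _ (fun i => vsub (sq (S (k + d))) (sq (k + d)%nat) i + vsub (sq (k + d)%nat) (sq k) i)).
      intros; unfold vsub. replace (k + S d)%nat with (S (k + d)) by lia. lra.
      eapply Bd_mono. 2: apply Bd_tri; [auto | apply Sst | apply IHd].
      replace (k + S d)%nat with (S (k + d)) by lia. simpl. apply Req_le. field.
      pose proof (pow2_pos (k + d)). pose proof (pow2_pos k). lra. }
  assert (Scau' : forall i k m, (i < n)%nat -> (k <= m)%nat -> Rabs (sq m i - sq k i) <= 4 * rho / 2 ^ k).
  { intros i k m Hi Hkm. replace m with (Nat.add k (Nat.sub m k)) by lia.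
    pose proof (Bd_near n y K _ _ HK (Scau k (m - k)%nat) i Hi). unfold vsub in H.
    assert (0 <= 4 * rho / 2 ^ (k + (m - k))) by (apply Rdiv_le_0_compat; [lra | apply pow2_pos]). lra. }
  assert (Szero : forall i k, (n <= i)%nat -> sq k i = 0).
  { intros i k Hi. destruct (Sb k) as [_ H]. auto. }
  assert (Hcau : forall i, Cauchy_crit (fun m => sq m i)).
  { intros i eps He. destruct (Nat.lt_ge_cases i n) as [Hi|Hi].
    - destruct (INR_unbounded (8 * rho / eps)) as [N HN]. exists N. intros a b Ha Hb. unfold R_dist.
      assert (Hb' : Rabs (sq a i - sq N i) <= 4 * rho / 2 ^ N) by (apply Scau'; auto).
      assert (Ha' : Rabs (sq b i - sq N i) <= 4 * rho / 2 ^ N) by (apply Scau'; auto).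
      assert (4 * rho / 2 ^ N < eps / 2).
      { pose proof (pow2_ge N). pose proof (pow2_pos N).
        assert (8 * rho < eps * INR N).
        { apply Rmult_lt_reg_r with (/ eps). apply Rinv_0_lt_compat; lra.
          replace (eps * INR N * / eps) with (INR N) by (field; lra). unfold Rdiv in HN. lra. }
        apply Rmult_lt_reg_r with (2 ^ N). auto. unfold Rdiv. rewrite Rmult_assoc, Rinv_l by lra.
        nra. }
      replace (sq a i - sq b i) with ((sq a i - sq N i) - (sq b i - sq N i)) by ring.
      eapply Rle_lt_trans. apply Rabs_triang. rewrite Rabs_Ropp. lra.
    - exists 0%nat. intros. unfold R_dist. rewrite !Szero by auto. rewrite Rminus_0_r, Rabs_R0. auto. }
  set (z := fun i => proj1_sig (R_complete _ (Hcau i))).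
  assert (Hz : forall i, Un_cv (fun m => sq m i) (z i)) by (intro i; unfold z; destruct (R_complete _ (Hcau i)); auto).
  assert (Zk : forall k, Bd n y K (4 * rho / 2 ^ k) (vsub z (sq k))).
  { intros k i Hi. unfold vsub. pose proof (wt_ge1 y K i HK) as Hw.
    set (B := 4 * rho / 2 ^ k).
    assert (EB : wt y K i * (B / wt y K i) = B) by (field; lra).
    assert (Rabs (z i - sq k i) <= B / wt y K i).
    { apply (cv_bound _ _ _ _ k (Hz i)). intros m Hm.
      pose proof (Scau k (m - k)%nat i Hi). replace (k + (m - k))%nat with m in H by lia.
      unfold vsub in H.
      assert (0 <= 4 * rho / 2 ^ m) by (apply Rdiv_le_0_compat; [lra | apply pow2_pos]).
      apply Rmult_le_reg_l with (wt y K i). lra. rewrite EB. unfold B. lra. }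
    rewrite <- EB. apply Rmult_le_compat_l; lra. }
  assert (Zbox : box n y K rho z).
  { split.
    - apply (Bd_lim n y K rho (4 * rho)). lra. intro k.
      apply (Bd_ext n y K _ (fun i => vsub z (sq k) i + vsub (sq k) y i)). intros; unfold vsub; ring.
      rewrite Rplus_comm. apply Bd_tri; auto. destruct (Sb k); auto.
    - intros i Hi. apply (UL_sequence (fun m => sq m i)); auto.
      replace (fun m => sq m i) with (fun _ : nat => 0). intros eps He; exists 0%nat; intros; unfold R_dist; replace (0-0) with 0 by ring; rewrite Rabs_R0; auto.
      apply functional_extensionality; intro m; rewrite Szero; auto. }
  exists z. split; auto.
  assert (Bd n y K 0 (vsub (Tm z) z)).
  { apply (Bd_lim n y K 0 (4 * rho)). lra. intro k.
    apply (Bd_ext n y K _ (fun i => vsub (Tm z) (Tm (sq k)) i + vsub (sq (S k)) z i)).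
    intros; unfold vsub; rewrite Ssq; ring.
    assert (Hpos : 0 <= 4 * rho / 2 ^ k) by (apply Rdiv_le_0_compat; [lra | apply pow2_pos]).
    eapply Bd_mono. 2: apply Bd_tri. 2: exact HK. 2: apply (HC z (sq k) (4*rho/2^k) Zbox (Sb k) Hpos (Zk k)).
    2: apply Bd_sym, (Zk (S k)).
    simpl. apply Req_le. field. pose proof (pow2_pos k). lra. }
  apply functional_extensionality; intro i. destruct (Nat.lt_ge_cases i n).
  - pose proof (Bd0_eq n y K _ HK H i H0). unfold vsub in H1. lra.
  - destruct (HS z Zbox) as [_ B]. destruct Zbox as [_ A]. rewrite A, B; auto. Qed.

Lemma Loc_delta n u y G g eps Cb dd rho Lg Cl K : Loc n u y G g eps Cb dd rho Lg Cl K -> Delta_set n y.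
Proof. intros HL. destruct (L_NE _ _ _ _ _ _ _ _ _ _ _ _ HL); auto. Qed.

Lemma Lam_mono n g dd rho Lg Cl K Cb l l' : 0 <= g -> 0 <= Lg -> 0 <= Cl -> 1 <= K -> 0 < dd -> 0 <= Cb ->
  Lam n g dd rho Lg Cl K Cb l -> 0 < l' -> l' <= l -> Lam n g dd rho Lg Cl K Cb l'.
Proof. intros Hg HLg HCl HK Hdd HCb [H0 [H1 [H2 H3]]] Hl' Hle. pose proof (pos_INR n).
  assert (0 <= INR n * g * Lg) by (apply Rmult_le_pos; [apply Rmult_le_pos|]; auto).
  assert (0 <= K * (4 / (dd * dd)) * INR n * Cb).
  { assert (Hq: 0 <= 4 / (dd*dd)) by (apply Rlt_le, Rdiv_lt_0_compat; nra).
    apply Rmult_le_pos; [apply Rmult_le_pos; [apply Rmult_le_pos|]|]; lra. }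
  assert (0 <= INR n * g * Cl + K / dd).
  { apply Rplus_le_le_0_compat. apply Rmult_le_pos; [apply Rmult_le_pos|]; auto. apply Rdiv_le_0_compat; lra. }
  split; auto. split; [|split].
  - replace (INR n * g * l' * Lg) with ((INR n * g * Lg) * l') by ring.
    replace (INR n * g * l * Lg) with ((INR n * g * Lg) * l) in H1 by ring. nra.
  - replace (K * (4 * l' / (dd * dd)) * INR n * Cb) with ((K * (4 / (dd * dd)) * INR n * Cb) * l') by (field; lra).
    replace (K * (4 * l / (dd * dd)) * INR n * Cb) with ((K * (4 / (dd * dd)) * INR n * Cb) * l) in H2 by (field; lra). nra.
  - nra. Qed.

Lemma T_out n u y G l x i : (n <= i)%nat -> T n u y G l x i = 0.
Proof. intros. unfold T. destruct (Nat.ltb_spec i n). lia. auto. Qed.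

Lemma T_box n u y G g eps Cb dd rho Lg Cl K l x :
  Loc n u y G g eps Cb dd rho Lg Cl K -> Lam n g dd rho Lg Cl K Cb l ->
  box n y K rho x -> box n y K rho (T n u y G l x).
Proof. intros HL HLam Hx. pose proof (L_K _ _ _ _ _ _ _ _ _ _ _ _ HL) as HK.
  pose proof (L_rho _ _ _ _ _ _ _ _ _ _ _ _ HL) as Hr.
  assert (Hy : box n y K rho y).
  { split. intros i Hi. unfold vsub. replace (y i - y i) with 0 by ring. rewrite Rabs_R0, Rmult_0_r. lra.
    intros i Hi. destruct (Loc_delta _ _ _ _ _ _ _ _ _ _ _ _ HL i) as [_ A]. auto. }
  split.
  - apply (Bd_ext n y K _ (fun i => vsub (T n u y G l x) (T n u y G l y) i + vsub (T n u y G l y) y i)).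
    intros; unfold vsub; ring.
    replace rho with (rho / 2 + rho / 2) by field. apply Bd_tri; auto.
    apply (T_contr n u y G g eps Cb dd rho Lg Cl K); auto. apply (box_near n y K); auto. apply (box_near n y K); auto. lra.
    destruct Hx; auto.
    destruct HLam as [Hl [_ [_ H3]]]. eapply Bd_mono; [exact H3|]. apply (Ty_near n u y G g eps Cb dd rho Lg Cl K); auto.
  - intros; apply T_out; auto. Qed.

Lemma Phi_zero n u y G z i : (forall k, (k < n)%nat -> ismix y k = true -> D n u k z = 0) ->
  Phi n u y G 0 z i = z i.
Proof. intros H. unfold Phi. rewrite sum_lt_zero. ring. intros k Hk.
  assert (Mk : mx y k = if ismix y k then 1 else 0) by reflexivity.
  destruct (ismix y k) eqn:Ek. rewrite H; auto. ring. rewrite Mk; ring. Qed.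

Lemma NE_local_unique n u y G g eps Cb dd rho Lg Cl K x :
  Loc n u y G g eps Cb dd rho Lg Cl K -> NE n u x -> near n y x (rho / K) -> x = y.
Proof. intros HL HNE Hn. pose proof (L_K _ _ _ _ _ _ _ _ _ _ _ _ HL) as HK.
  pose proof (L_rho _ _ _ _ _ _ _ _ _ _ _ _ HL) as Hr.
  assert (Hnr : near n y x rho).
  { intros j Hj. specialize (Hn j Hj). apply Rle_trans with (rho / K); auto.
    apply Rmult_le_reg_l with K. lra. replace (K * (rho / K)) with rho by (field; lra). nra. }
  assert (Hyr : near n y y rho). { intros j Hj. replace (y j - y j) with 0 by ring. rewrite Rabs_R0. lra. }
  assert (HDx : forall k, (k < n)%nat -> ismix y k = true -> D n u k x = 0).
  { intros k Hk Ek. apply (NE_mix n u x k HNE Hk). apply (L_marg _ _ _ _ _ _ _ _ _ _ _ _ HL k Hk Ek). apply Hnr; auto. }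
  assert (HDy : forall k, (k < n)%nat -> ismix y k = true -> D n u k y = 0).
  { intros k Hk Ek. apply (NE_mix n u y k (L_NE _ _ _ _ _ _ _ _ _ _ _ _ HL) Hk). apply ismix_iff in Ek. exact Ek. }
  assert (Hpure : forall i, (i < n)%nat -> ismix y i = false -> x i = y i).
  { intros i Hi Ei. pose proof (L_dd0 _ _ _ _ _ _ _ _ _ _ _ _ HL).
    destruct (L_dd _ _ _ _ _ _ _ _ _ _ _ _ HL i Hi Ei x Hnr) as [[Ey Hd]|[Ey Hd]]; rewrite Ey.
    apply (NE_pos n u x i HNE Hi). lra. apply (NE_neg n u x i HNE Hi). lra. }
  assert (Bd n y K (2 * 0) (vsub x y)).
  { apply (bd_iter n y K rho). lra. lra.
    - intros r Hr0 HB i Hi. rewrite Rplus_0_r. unfold wt, vsub. destruct (ismix y i) eqn:Ei.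
      + rewrite Rmult_1_l. rewrite <- (Phi_zero n u y G x i HDx), <- (Phi_zero n u y G y i HDy).
        eapply Rle_trans. apply (Phi_est n u y G g eps Cb dd rho Lg Cl K 0 x y r i HL); auto; lra.
        pose proof (L_small _ _ _ _ _ _ _ _ _ _ _ _ HL). nra.
      + rewrite Hpure by auto. replace (y i - y i) with 0 by ring. rewrite Rabs_R0. nra.
    - intros i Hi. unfold vsub. pose proof (Hn i Hi). pose proof (Hnr i Hi). pose proof (wt_ge1 y K i HK).
      unfold wt in *. destruct (ismix y i); [lra|].
      apply Rle_trans with (K * (rho / K)). apply Rmult_le_compat_l; lra. apply Req_le; field; lra. }
  rewrite Rmult_0_r in H. apply functional_extensionality; intro i.
  destruct (Nat.lt_ge_cases i n).
  - pose proof (Bd0_eq n y K _ HK H i H0). unfold vsub in H1. lra.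
  - destruct HNE as [HDe _]. destruct (HDe i) as [_ A]. destruct (Loc_delta _ _ _ _ _ _ _ _ _ _ _ _ HL i) as [_ B].
    rewrite A, B; auto. Qed.

Lemma FP_ND n u y G g eps Cb dd rho Lg Cl K l z :
  Loc n u y G g eps Cb dd rho Lg Cl K -> 0 < l -> box n y K rho z -> T n u y G l z = z -> ND n u l z.
Proof. intros HL Hl Hb Hf. pose proof (L_K _ _ _ _ _ _ _ _ _ _ _ _ HL) as HK.
  pose proof (box_near n y K rho z HK Hb) as Hnz.
  assert (Hmix : forall i, (i < n)%nat -> ismix y i = true -> 0 < z i < 1).
  { intros i Hi Ei. apply (L_marg _ _ _ _ _ _ _ _ _ _ _ _ HL i Hi Ei). apply Hnz; auto. }
  assert (HTi : forall i, (i < n)%nat -> T n u y G l z i = z i) by (intros; rewrite Hf; auto).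
  set (v := fun k => D n u k z - l * lg (z k)).
  assert (Hs : forall i, (i < n)%nat -> ismix y i = true -> sum_lt n (fun k => mx y k * G i k * v k) = 0).
  { intros i Hi Ei. specialize (HTi i Hi). unfold T in HTi.
    assert (Hin : (i <? n)%nat = true) by (apply Nat.ltb_lt; auto). rewrite Hin, Ei in HTi.
    unfold Phi in HTi. unfold v. lra. }
  assert (Hv : forall i, (i < n)%nat -> ismix y i = true -> v i = 0).
  { intros i Hi Ei.
    transitivity (sum_lt n (fun j => (if Nat.eqb i j then 1 else 0) * (mx y j * v j))).
    { rewrite sum_lt_delta; auto. unfold mx; rewrite Ei; ring. }
    transitivity (sum_lt n (fun j => mx y j * v j * sum_lt n (fun k => mx y k * (DD n u i k y * G k j)))).
    { apply sum_lt_ext; intros j Hj. assert (Mj : mx y j = if ismix y j then 1 else 0) by reflexivity.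
      destruct (ismix y j) eqn:Ej.
      - rewrite (L_HG _ _ _ _ _ _ _ _ _ _ _ _ HL i j Hi Hj Ei Ej). ring.
      - rewrite Mj. ring. }
    transitivity (sum_lt n (fun k => mx y k * DD n u i k y * sum_lt n (fun j => mx y j * G k j * v j))).
    { rewrite sum_swap_scal. apply sum_lt_ext; intros k Hk.
      rewrite <- (sum_lt_scal n (mx y k * DD n u i k y)). rewrite <- sum_lt_scal.
      apply sum_lt_ext; intros j Hj. ring. }
    apply sum_lt_zero. intros k Hk. assert (Mk : mx y k = if ismix y k then 1 else 0) by reflexivity.
    destruct (ismix y k) eqn:Ek.
    - rewrite <- (Hs k Hk Ek). replace (sum_lt n (fun j => mx y j * G k j * v j)) with
        (sum_lt n (fun k0 => mx y k0 * G k k0 * v k0)) by auto. rewrite Hs; auto. ring.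
    - rewrite Mk. ring. }
  apply ND_iff; auto. split.
  - intros i. split.
    + intros Hi. destruct (ismix y i) eqn:Ei. pose proof (Hmix i Hi Ei); lra.
      rewrite <- (HTi i Hi). unfold T. assert (Hin : (i <? n)%nat = true) by (apply Nat.ltb_lt; auto).
      rewrite Hin, Ei. pose proof (sig_pos (D n u i z / l)). lra.
    + intros Hi. destruct Hb as [_ A]. auto.
  - intros i Hi. destruct (ismix y i) eqn:Ei.
    + apply sig_lg_iff. apply Hmix; auto. specialize (Hv i Hi Ei). unfold v in Hv.
      apply Rmult_eq_reg_l with l. field_simplify; lra. lra.
    + rewrite <- (HTi i Hi) at 1. unfold T. assert (Hin : (i <? n)%nat = true) by (apply Nat.ltb_lt; auto).
      rewrite Hin, Ei. auto. Qed.

Lemma ND_FP n u y G g eps Cb dd rho Lg Cl K l z :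
  Loc n u y G g eps Cb dd rho Lg Cl K -> 0 < l -> ND n u l z -> near n y z rho -> T n u y G l z = z.
Proof. intros HL Hl HND Hnz. apply ND_iff in HND; auto. destruct HND as [HD HE].
  apply functional_extensionality; intro i. unfold T.
  destruct (Nat.ltb_spec i n).
  - destruct (ismix y i) eqn:Ei.
    + unfold Phi. rewrite sum_lt_zero. ring. intros k Hk.
      assert (Mk : mx y k = if ismix y k then 1 else 0) by reflexivity.
      destruct (ismix y k) eqn:Ek.
      * assert (0 < z k < 1) by (apply (L_marg _ _ _ _ _ _ _ _ _ _ _ _ HL k Hk Ek); apply Hnz; auto).
        pose proof (HE k Hk). apply sig_lg_iff in H1; auto. rewrite H1. field_simplify. ring. lra.
      * rewrite Mk. ring.
    + rewrite <- HE; auto.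
  - destruct (HD i) as [_ A]. rewrite A; auto. Qed.

Lemma T_lam_diff n u y G g eps Cb dd rho Lg Cl K z0 l0 :
  Loc n u y G g eps Cb dd rho Lg Cl K -> 0 < l0 ->
  exists C, 0 <= C /\ forall l, l0 / 2 <= l ->
    Bd n y K (C * Rabs (l - l0)) (vsub (T n u y G l z0) (T n u y G l0 z0)).
Proof. intros HL Hl0.
  destruct (fin_bound n (fun k => lg (z0 k))) as [Lz [HLz HLzb]].
  destruct (fin_bound n (fun k => D n u k z0)) as [Dz [HDz HDzb]].
  pose proof (L_K _ _ _ _ _ _ _ _ _ _ _ _ HL) as HK.
  pose proof (L_g0 _ _ _ _ _ _ _ _ _ _ _ _ HL) as Hg0.
  pose proof (pos_INR n) as Hn.
  exists (INR n * g * Lz + K * Dz * (2 / (l0 * l0))).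
  assert (H2 : 0 <= 2 / (l0 * l0)) by (apply Rlt_le, Rdiv_lt_0_compat; nra).
  assert (HA : 0 <= INR n * g * Lz) by (apply Rmult_le_pos; [apply Rmult_le_pos|]; auto).
  assert (HB : 0 <= K * Dz * (2 / (l0 * l0))) by (apply Rmult_le_pos; [apply Rmult_le_pos|]; lra).
  split. lra.
  intros l Hl i Hi. unfold T, vsub, wt. assert (Hin : (i <? n)%nat = true) by (apply Nat.ltb_lt; auto).
  rewrite Hin. pose proof (Rabs_pos (l - l0)) as Hab.
  destruct (ismix y i) eqn:Ei.
  - rewrite Rmult_1_l. unfold Phi.
    replace (z0 i - sum_lt n (fun k => mx y k * G i k * (D n u k z0 - l * lg (z0 k))) -
             (z0 i - sum_lt n (fun k => mx y k * G i k * (D n u k z0 - l0 * lg (z0 k)))))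
      with ((l - l0) * sum_lt n (fun k => mx y k * G i k * lg (z0 k))).
    + rewrite Rabs_mult. apply Rle_trans with (Rabs (l - l0) * (INR n * g * Lz)).
      apply Rmult_le_compat_l; auto. rewrite Rmult_assoc. apply sum_bound. intros k Hk.
      eapply Rle_trans. apply mxG_bound. apply (L_g _ _ _ _ _ _ _ _ _ _ _ _ HL); auto.
      apply Rmult_le_compat_l; auto. nra.
    + match goal with |- _ = ?a - ?b - (?a - ?c) => transitivity (c - b); [|ring] end.
      rewrite <- sum_lt_minus, <- sum_lt_scal. apply sum_lt_ext; intros; ring.
  - assert (Hl' : 0 < l) by lra.
    eapply Rle_trans. apply Rmult_le_compat_l. lra. apply sig_lip.
    replace (D n u i z0 / l - D n u i z0 / l0) with (D n u i z0 * (l0 - l) / (l * l0)) by (field; lra).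
    unfold Rdiv. rewrite !Rabs_mult. rewrite (Rabs_right (/ (l * l0))) by (apply Rle_ge, Rlt_le, Rinv_0_lt_compat; nra).
    replace (l0 - l) with (- (l - l0)) by ring. rewrite Rabs_Ropp.
    assert (/ (l * l0) <= 2 / (l0 * l0)).
    { apply Rmult_le_reg_l with (l * l0). nra. unfold Rdiv. rewrite Rinv_r by nra.
      replace (l * l0 * (2 * / (l0 * l0))) with (2 * l / l0) by (field; lra).
      apply Rmult_le_reg_l with l0. lra. replace (l0 * (2 * l / l0)) with (2 * l) by (field; lra). lra. }
    pose proof (HDzb i Hi). pose proof (Rabs_pos (D n u i z0)).
    assert (0 <= / (l * l0)) by (apply Rlt_le, Rinv_0_lt_compat; nra).
    assert (X : Rabs (D n u i z0) * Rabs (l - l0) * / (l * l0) <= Dz * Rabs (l - l0) * (2 / (l0 * l0))).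
    { apply Rmult_le_compat; try nra. }
    apply Rle_trans with (K * (Dz * Rabs (l - l0) * (2 / (l0 * l0)))). apply Rmult_le_compat_l; lra.
    apply Rle_trans with (K * Dz * (2 / (l0 * l0)) * Rabs (l - l0)). apply Req_le; ring.
    assert (0 <= INR n * g * Lz * Rabs (l - l0)) by (apply Rmult_le_pos; auto). nra. Qed.

Lemma local_B n u y G g eps Cb dd rho Lg Cl K l1 :
  Loc n u y G g eps Cb dd rho Lg Cl K -> Lam n g dd rho Lg Cl K Cb l1 ->
  exists f : R -> nat -> R,
   (forall x, NE n u x -> near n y x (rho / K) -> x = y) /\
   (forall l, 0 < l <= l1 -> ND n u l (f l)) /\
   (forall l, 0 < l <= l1 -> forall x, ND n u l x -> near n y x (rho / K) -> x = f l) /\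
   (forall l, 0 < l < l1 -> forall i, continuity_pt (fun l => f l i) l) /\
   (forall e, 0 < e -> exists d, 0 < d /\ forall l, 0 < l < d -> l <= l1 -> forall i, Rabs (f l i - y i) < e).
Proof. intros HL HLam.
  pose proof (L_K _ _ _ _ _ _ _ _ _ _ _ _ HL) as HK.
  pose proof (L_rho _ _ _ _ _ _ _ _ _ _ _ _ HL) as Hr.
  pose proof (Loc_delta _ _ _ _ _ _ _ _ _ _ _ _ HL) as HDy.
  assert (Hy0 : forall i, (n <= i)%nat -> y i = 0) by (intros; destruct (HDy i) as [_ A]; auto).
  assert (HLl : forall l, 0 < l <= l1 -> Lam n g dd rho Lg Cl K Cb l).
  { intros l Hl. apply (Lam_mono n g dd rho Lg Cl K Cb l1 l); try tauto.
    apply (L_g0 _ _ _ _ _ _ _ _ _ _ _ _ HL). apply (L_Lg0 _ _ _ _ _ _ _ _ _ _ _ _ HL).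
    apply (L_Cl0 _ _ _ _ _ _ _ _ _ _ _ _ HL). apply (L_dd0 _ _ _ _ _ _ _ _ _ _ _ _ HL).
    apply (L_Cb0 _ _ _ _ _ _ _ _ _ _ _ _ HL). }
  assert (HC : forall l, 0 < l <= l1 -> forall x x' r, box n y K rho x -> box n y K rho x' -> 0 <= r ->
     Bd n y K r (vsub x x') -> Bd n y K (r / 2) (vsub (T n u y G l x) (T n u y G l x'))).
  { intros l Hl x x' r Hx Hx' Hr0 HB. apply (T_contr n u y G g eps Cb dd rho Lg Cl K); auto.
    apply (box_near n y K); auto. apply (box_near n y K); auto. }
  assert (HS : forall l, 0 < l <= l1 -> forall x, box n y K rho x -> box n y K rho (T n u y G l x)).
  { intros l Hl x Hx. apply (T_box n u y G g eps Cb dd rho Lg Cl K); auto. }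
  assert (Hf : forall l, {z | 0 < l <= l1 -> box n y K rho z /\ T n u y G l z = z}).
  { intro l. apply constructive_indefinite_description.
    destruct (classic (0 < l <= l1)) as [Hl|Hl].
    - destruct (fp_exists n y K rho (T n u y G l) HK Hr Hy0 (HC l Hl) (HS l Hl)) as [z Hz]. exists z; auto.
    - exists y. tauto. }
  set (f := fun l => proj1_sig (Hf l)).
  assert (Hfp : forall l, 0 < l <= l1 -> box n y K rho (f l) /\ T n u y G l (f l) = f l).
  { intros l Hl. unfold f. destruct (Hf l) as [z Hz]. simpl. auto. }
  assert (Hbox_near : forall x, Delta_set n x -> near n y x (rho / K) -> box n y K rho x).
  { intros x HDx Hn. split.
    - intros i Hi. unfold vsub. pose proof (Hn i Hi). pose proof (wt_ge1 y K i HK).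
      assert (wt y K i <= K) by (unfold wt; destruct (ismix y i); lra).
      apply Rle_trans with (K * (rho / K)). apply Rmult_le_compat; try lra. apply Rabs_pos.
      apply Req_le; field; lra.
    - intros i Hi. destruct (HDx i) as [_ A]; auto. }
  set (c1 := INR n * g * Cl + K / dd).
  assert (Hc1 : 0 <= c1).
  { unfold c1. pose proof (pos_INR n). pose proof (L_g0 _ _ _ _ _ _ _ _ _ _ _ _ HL).
    pose proof (L_Cl0 _ _ _ _ _ _ _ _ _ _ _ _ HL). pose proof (L_dd0 _ _ _ _ _ _ _ _ _ _ _ _ HL).
    apply Rplus_le_le_0_compat. apply Rmult_le_pos; [apply Rmult_le_pos|]; auto. apply Rdiv_le_0_compat; lra. }
  assert (Hconv : forall l, 0 < l <= l1 -> forall i, Rabs (f l i - y i) <= 2 * (l * c1)).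
  { intros l Hl i. destruct (Hfp l Hl) as [Hb Ht].
    assert (Bd n y K (2 * (l * c1)) (vsub (f l) y)).
    { apply (bd_iter n y K (rho)). lra. apply Rmult_le_pos; lra.
      - intros r Hr0 HB.
        apply (Bd_ext n y K _ (fun i => vsub (T n u y G l (f l)) (T n u y G l y) i + vsub (T n u y G l y) y i)).
        intros; unfold vsub; rewrite Ht; ring.
        apply Bd_tri; auto. apply HC; auto.
        split. intros j Hj. unfold vsub. replace (y j - y j) with 0 by ring. rewrite Rabs_R0, Rmult_0_r. lra. auto.
        apply (Ty_near n u y G g eps Cb dd rho Lg Cl K); auto. lra.
      - destruct Hb; auto. }
    destruct (Nat.lt_ge_cases i n).
    - apply (Bd_near n y K _ _ HK H i H0).
    - destruct Hb as [_ A]. rewrite A, Hy0; auto. replace (0 - 0) with 0 by ring. rewrite Rabs_R0.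
      apply Rmult_le_pos. lra. apply Rmult_le_pos; lra. }
  exists f. split; [|split; [|split; [|split]]].
  - intros x HNE Hn. apply (NE_local_unique n u y G g eps Cb dd rho Lg Cl K); auto.
  - intros l Hl. destruct (Hfp l Hl). apply (FP_ND n u y G g eps Cb dd rho Lg Cl K); auto. lra.
  - intros l Hl x HND Hn. destruct (Hfp l Hl) as [Hb Ht].
    assert (Hnr : near n y x rho).
    { intros j Hj. specialize (Hn j Hj). apply Rle_trans with (rho / K); auto.
      apply Rmult_le_reg_l with K. lra. replace (K * (rho / K)) with rho by (field; lra). nra. }
    apply (fp_unique n y K rho (T n u y G l)); auto.
    apply Hbox_near; auto. destruct HND; auto.
    apply (ND_FP n u y G g eps Cb dd rho Lg Cl K); auto. lra.
  - intros l0 Hl0 i. destruct (Hfp l0 ltac:(lra)) as [Hb0 Ht0].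
    destruct (T_lam_diff n u y G g eps Cb dd rho Lg Cl K (f l0) l0 HL ltac:(lra)) as [C [HC0 HCd]].
    intros e He. exists (Rmin (Rmin (l0 / 2) (l1 - l0)) (e / (2 * C + 1))).
    split. apply Rmin_glb_lt. apply Rmin_glb_lt; lra. apply Rdiv_lt_0_compat; lra.
    intros l [_ Hll]. simpl in Hll. unfold R_dist in *.
    pose proof (Rmin_l (Rmin (l0 / 2) (l1 - l0)) (e / (2 * C + 1))).
    pose proof (Rmin_r (Rmin (l0 / 2) (l1 - l0)) (e / (2 * C + 1))).
    pose proof (Rmin_l (l0 / 2) (l1 - l0)). pose proof (Rmin_r (l0 / 2) (l1 - l0)).
    assert (Hl : 0 < l <= l1) by (split; destruct (Rabs_def2 _ _ Hll); lra).
    assert (Hl2 : l0 / 2 <= l) by (destruct (Rabs_def2 _ _ Hll); lra).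
    destruct (Hfp l Hl) as [Hb Ht].
    assert (HBD : Bd n y K (2 * (C * Rabs (l - l0))) (vsub (f l) (f l0))).
    { apply (bd_iter n y K (2 * rho)). lra. apply Rmult_le_pos; auto. apply Rabs_pos.
      - intros r Hr0 HB.
        apply (Bd_ext n y K _ (fun i => vsub (T n u y G l (f l)) (T n u y G l (f l0)) i +
                                      vsub (T n u y G l (f l0)) (T n u y G l0 (f l0)) i)).
        intros; unfold vsub; rewrite Ht, Ht0; ring.
        apply Bd_tri; auto.
      - apply box_diff; auto. }
    destruct (Nat.lt_ge_cases i n) as [Hin|Hin].
    + pose proof (Bd_near n y K _ _ HK HBD i Hin) as H6. unfold vsub in H6.
      eapply Rle_lt_trans. apply H6.
      apply Rle_lt_trans with (2 * C * (e / (2 * C + 1))).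
      replace (2 * (C * Rabs (l - l0))) with (2 * C * Rabs (l - l0)) by ring.
      apply Rmult_le_compat_l. lra. lra.
      apply Rmult_lt_reg_r with (2 * C + 1). lra. unfold Rdiv.
      replace (2 * C * (e * / (2 * C + 1)) * (2 * C + 1)) with (2 * C * e) by (field; lra). nra.
    + destruct Hb as [_ A]. destruct Hb0 as [_ B]. rewrite A, B by auto. replace (0 - 0) with 0 by ring.
      simpl. unfold R_dist. rewrite Rminus_0_r, Rabs_R0. lra.
  - intros e He. exists (e / (2 * c1 + 1)). split. apply Rdiv_lt_0_compat; lra.
    intros l Hl Hl1 i. eapply Rle_lt_trans. apply Hconv. lra.
    apply Rle_lt_trans with (2 * c1 * (e / (2 * c1 + 1))).
    replace (2 * (l * c1)) with (2 * c1 * l) by ring. apply Rmult_le_compat_l; lra.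
    apply Rmult_lt_reg_r with (2 * c1 + 1). lra. unfold Rdiv.
    replace (2 * c1 * (e * / (2 * c1 + 1)) * (2 * c1 + 1)) with (2 * c1 * e) by (field; lra). nra. Qed.

Lemma ifmix_mx y k A : (if Rlt_dec 0 (y k) then if Rlt_dec (y k) 1 then A else 0 else 0) = mx y k * A.
Proof. unfold mx, ismix. destruct (Rlt_dec 0 (y k)); destruct (Rlt_dec (y k) 1); ring. Qed.

Lemma Ev_True : Ev (fun _ => True).
Proof. exists 1. split; auto. lra. Qed.

Lemma Loc_exists n u y : NE n u y -> regular_NE n u y ->
  exists G g eps Cb dd rho Lg Cl K, Loc n u y G g eps Cb dd rho Lg Cl K /\
    exists l1, Lam n g dd rho Lg Cl K Cb l1.
Proof. intros HNE [HQ [H [G [HH [HHG HGH]]]]].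
  pose proof HNE as [HDy _].
  assert (Hhess : forall i j, (i < n)%nat -> (j < n)%nat -> ismix y i = true -> ismix y j = true -> H i j = DD n u i j y).
  { intros i j Hi Hj Ei Ej. apply hess_id; auto. apply HH; auto; apply ismix_iff; auto. }
  assert (LGH : forall i j, (i < n)%nat -> (j < n)%nat -> ismix y i = true -> ismix y j = true ->
     sum_lt n (fun k => mx y k * (G i k * DD n u k j y)) = if Nat.eqb i j then 1 else 0).
  { intros i j Hi Hj Ei Ej. rewrite <- (HGH i j Hi Hj) by (apply ismix_iff; auto).
    apply sum_lt_ext; intros k Hk. rewrite ifmix_mx.
    assert (Mk : mx y k = if ismix y k then 1 else 0) by reflexivity.
    destruct (ismix y k) eqn:Ek. rewrite Hhess; auto. rewrite Mk; ring. }
  assert (LHG : forall i j, (i < n)%nat -> (j < n)%nat -> ismix y i = true -> ismix y j = true ->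
     sum_lt n (fun k => mx y k * (DD n u i k y * G k j)) = if Nat.eqb i j then 1 else 0).
  { intros i j Hi Hj Ei Ej. rewrite <- (HHG i j Hi Hj) by (apply ismix_iff; auto).
    apply sum_lt_ext; intros k Hk. rewrite ifmix_mx.
    assert (Mk : mx y k = if ismix y k then 1 else 0) by reflexivity.
    destruct (ismix y k) eqn:Ek. rewrite Hhess; auto. rewrite Mk; ring. }
  clear HH HHG HGH.
  destruct (fin_bound2 n G) as [g [Hg0 Hg]].
  pose proof (pos_INR n) as Hn.
  assert (Hng : 0 <= INR n * INR n * g) by (apply Rmult_le_pos; [apply Rmult_le_pos|]; auto).
  set (eps := 1 / (8 * (INR n * INR n * g + 1))).
  assert (Heps : 0 < eps) by (unfold eps; apply Rdiv_lt_0_compat; lra).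
  assert (Heps2 : INR n * INR n * g * eps <= 1 / 8).
  { unfold eps. apply Rmult_le_reg_r with (8 * (INR n * INR n * g + 1)). lra.
    field_simplify; lra. }
  destruct (fin_bound2 n (fun k j => DD n u k j y)) as [B [HB0 HB]].
  set (Cb := B + eps).
  set (K := 8 * (INR n * INR n * g * Cb) + 1).
  assert (HK : 1 <= K) by (unfold K, Cb; nra).
  assert (HCK : INR n * INR n * g * (Cb / K) <= 1 / 8).
  { assert (Ea : INR n * INR n * g * (Cb / K) = (INR n * INR n * g * Cb) / K) by (field; lra).
    rewrite Ea. assert (0 <= INR n * INR n * g * Cb) by (apply Rmult_le_pos; auto; unfold Cb; lra).
    apply Rmult_le_reg_r with K. lra. unfold Rdiv at 1. rewrite Rmult_assoc, Rinv_l, Rmult_1_r by lra.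
    unfold K. lra. }
  assert (Hpure : forall i, (i < n)%nat -> ismix y i = false ->
            (y i = 1 /\ 0 < D n u i y) \/ (y i = 0 /\ D n u i y < 0)).
  { intros i Hi Ei. apply ismix_false in Ei. unfold mixing in Ei. destruct (HDy i) as [A _]. specialize (A Hi).
    destruct (HQ i Hi) as [Q1 Q0]. unfold D, part.
    destruct (Req_dec (y i) 1). left. split; auto. specialize (Q1 H0). lra.
    destruct (Req_dec (y i) 0). right. split; auto. specialize (Q0 H1). lra.
    exfalso. apply Ei. lra. }
  assert (Evdd : Ev (fun d => forall i, (i < n)%nat -> ismix y i = false -> 2 * d <= Rabs (D n u i y))).
  { apply Ev_forall. intros i Hi. destruct (ismix y i) eqn:Ei.
    - exists 1. split. lra. intros. discriminate.
    - apply (Ev_impl (fun d => d <= Rabs (D n u i y) / 2)).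
      apply Ev_le. destruct (Hpure i Hi Ei) as [[_ A]|[_ A]].
      rewrite Rabs_right by lra. lra. rewrite Rabs_left by lra. lra.
      intros t Ht Htle _. lra. }
  destruct (Ev_pick _ Evdd) as [dd [Hdd Hddp]].
  assert (Evr : Ev (fun r => (forall k, (k < n)%nat -> forall j, (j < n)%nat -> forall z, near n y z r ->
                     Rabs (DD n u k j z - DD n u k j y) <= eps) /\
                   (forall i, (i < n)%nat -> forall z, near n y z r -> Rabs (D n u i z - D n u i y) <= dd) /\
                   (forall k, (k < n)%nat -> ismix y k = true -> r <= Rmin (y k) (1 - y k) / 2))).
  { apply Ev_and. apply Ev_forall. intros k Hk. apply Ev_forall. intros j Hj.
    apply (Ev_impl _ _ (DD_cont n u k j y eps Heps)). auto.
    apply Ev_and. apply Ev_forall. intros i Hi. apply (Ev_impl _ _ (D_cont n u i y dd Hdd)). auto.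
    apply Ev_forall. intros k Hk. destruct (ismix y k) eqn:Ek.
    - apply (Ev_impl (fun r => r <= Rmin (y k) (1 - y k) / 2)). apply Ev_le.
      apply ismix_iff in Ek. unfold mixing in Ek. apply Rmult_lt_0_compat. apply Rmin_glb_lt; lra. lra.
      auto.
    - exists 1. split. lra. intros. discriminate. }
  destruct (Ev_pick _ Evr) as [rho [Hrho [Hr1 [Hr2 Hr3]]]].
  set (ck := fun k => Rmin (y k) (1 - y k) / 2).
  destruct (fin_bound n (fun k => if ismix y k then 2 / ck k else 0)) as [Lg [HLg0 HLg]].
  destruct (fin_bound n (fun k => lg (y k))) as [Cl [HCl0 HCl]].
  assert (Hmarg : forall k, (k < n)%nat -> ismix y k = true -> forall p, Rabs (p - y k) <= rho ->
           ck k <= p <= 1 - ck k /\ 0 < ck k).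
  { intros k Hk Ek p Hp. pose proof (Hr3 k Hk Ek). apply ismix_iff in Ek. unfold mixing in Ek.
    unfold ck. pose proof (Rmin_l (y k) (1 - y k)). pose proof (Rmin_r (y k) (1 - y k)).
    assert (0 < Rmin (y k) (1 - y k)) by (apply Rmin_glb_lt; lra).
    assert (Habs : - rho <= p - y k <= rho) by (split; [pose proof (Rabs_pos (p - y k)); destruct (Rle_dec 0 (p - y k)); [lra| rewrite Rabs_left in Hp by lra; lra] | pose proof (Rle_abs (p - y k)); lra]).
    lra. }
  exists G, g, eps, Cb, dd, rho, Lg, Cl, K. split.
  - constructor; auto.
    + lra.
    + unfold Cb; lra.
    + intros z Hz k j Hk Hj. unfold Cb. pose proof (Hr1 k Hk j Hj z Hz). pose proof (HB k j Hk Hj).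
      replace (DD n u k j z) with (DD n u k j y + (DD n u k j z - DD n u k j y)) by ring.
      eapply Rle_trans. apply Rabs_triang. lra.
    + intros i Hi Ei z Hz. pose proof (Hr2 i Hi z Hz). pose proof (Hddp i Hi Ei).
      destruct (Hpure i Hi Ei) as [[A1 A2]|[A1 A2]].
      * left. split; auto. rewrite Rabs_right in H1 by lra. pose proof (Rle_abs (D n u i y - D n u i z)).
        rewrite <- Rabs_Ropp in H0. replace (- (D n u i z - D n u i y)) with (D n u i y - D n u i z) in H0 by ring. lra.
      * right. split; auto. rewrite Rabs_left in H1 by lra. pose proof (Rle_abs (D n u i z - D n u i y)). lra.
    + intros k Hk Ek p Hp. destruct (Hmarg k Hk Ek p Hp). lra.
    + intros k Hk Ek p p' Hp Hp'. destruct (Hmarg k Hk Ek p Hp) as [A1 A2]. destruct (Hmarg k Hk Ek p' Hp') as [B1 _].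
      eapply Rle_trans. apply lg_lip; eauto. apply Rmult_le_compat_r. apply Rabs_pos.
      pose proof (HLg k Hk). rewrite Ek in H0. eapply Rle_trans. apply Rle_abs. auto.
    + rewrite Rmult_plus_distr_l. lra.
  - assert (Hd2 : 0 < dd * dd) by nra.
    assert (E1 : Ev (fun t => (INR n * g * Lg) * t <= 1/4)) by (apply Ev_lin; lra).
    assert (E2 : Ev (fun t => (K * (4 / (dd * dd)) * INR n * Cb) * t <= 1/2)) by (apply Ev_lin; lra).
    assert (E3 : Ev (fun t => (INR n * g * Cl + K / dd) * t <= rho / 2)) by (apply Ev_lin; lra).
    destruct (Ev_pick _ (Ev_and _ _ E1 (Ev_and _ _ E2 E3))) as [l1 [Hl1 [A1 [A2 A3]]]].
    exists l1. split; auto. split; [|split].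
    + replace (INR n * g * l1 * Lg) with (INR n * g * Lg * l1) by ring. auto.
    + replace (K * (4 * l1 / (dd * dd)) * INR n * Cb) with (K * (4 / (dd * dd)) * INR n * Cb * l1) by (field; lra). auto.
    + rewrite Rmult_comm. auto. Qed.

Lemma notNE_witness n u y : Delta_set n y -> ~ NE n u y ->
  exists i, (i < n)%nat /\ ((0 < D n u i y /\ y i < 1) \/ (D n u i y < 0 /\ 0 < y i)).
Proof. intros HD HN. apply NNPP. intro C. apply HN. apply NE_intro; auto.
  intros i Hi. destruct (HD i) as [A _]. specialize (A Hi). split; intro H.
  - destruct (Req_dec (y i) 1); auto. exfalso. apply C. exists i. split; auto. left. split; auto. lra.
  - destruct (Req_dec (y i) 0); auto. exfalso. apply C. exists i. split; auto. right. split; auto. lra. Qed.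

Lemma local_A n u y : Delta_set n y -> ~ NE n u y ->
  exists r l1, 0 < r /\ 0 < l1 /\ (forall x, near n y x r -> ~ NE n u x) /\
     (forall l, 0 < l <= l1 -> forall x, near n y x r -> ~ ND n u l x).
Proof. intros HD HN. destruct (notNE_witness n u y HD HN) as [i [Hi [[Hd Hy]|[Hd Hy]]]].
  - set (d := D n u i y).
    assert (Hd2 : 0 < d / 2) by (unfold d; lra). assert (Hy4 : 0 < (1 - y i) / 4) by lra.
    destruct (Ev_pick _ (Ev_and _ _ (D_cont n u i y (d / 2) Hd2) (Ev_le ((1 - y i) / 4) Hy4)))
      as [r [Hr [Hc Hrl]]].
    exists r, (d * (1 - y i) / 4). split; auto. split. apply Rmult_lt_0_compat; [apply Rmult_lt_0_compat|]; lra.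
    assert (Hx : forall x, near n y x r -> d / 2 <= D n u i x /\ x i < 1 - (1 - y i) / 2).
    { intros x Hx. specialize (Hc x Hx). pose proof (Hx i Hi). fold d in Hc.
      split. pose proof (Rle_abs (d - D n u i x)). rewrite <- Rabs_Ropp in Hc.
      replace (- (D n u i x - d)) with (d - D n u i x) in Hc by ring. lra.
      pose proof (Rle_abs (x i - y i)). lra. }
    split.
    + intros x Hxn HNE. destruct (Hx x Hxn). pose proof (NE_pos n u x i HNE Hi ltac:(lra)). lra.
    + intros l Hl x Hxn HND. destruct (Hx x Hxn) as [H1 H2]. apply ND_iff in HND; [|lra].
      destruct HND as [_ HE]. specialize (HE i Hi).
      assert (dd : d / 2 / l <= D n u i x / l) by (unfold Rdiv; apply Rmult_le_compat_r; [apply Rlt_le, Rinv_0_lt_compat|]; lra).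
      pose proof (sig_one _ _ dd). pose proof (exp_small (d / 2) l ltac:(lra) ltac:(lra)).
      assert (l / (d / 2) <= (1 - y i) / 2).
      { apply Rmult_le_reg_l with (d / 2). lra. replace (d / 2 * (l / (d / 2))) with l by (field; lra).
        destruct Hl. nra. }
      rewrite <- HE in H. lra.
  - set (d := - D n u i y).
    assert (Hd2 : 0 < d / 2) by (unfold d; lra). assert (Hy4 : 0 < y i / 4) by lra.
    destruct (Ev_pick _ (Ev_and _ _ (D_cont n u i y (d / 2) Hd2) (Ev_le (y i / 4) Hy4)))
      as [r [Hr [Hc Hrl]]].
    exists r, (d * y i / 4). split; auto. split. apply Rmult_lt_0_compat; [apply Rmult_lt_0_compat|]; lra.
    assert (Hx : forall x, near n y x r -> D n u i x <= - (d / 2) /\ y i / 2 < x i).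
    { intros x Hx. specialize (Hc x Hx). pose proof (Hx i Hi).
      split. pose proof (Rle_abs (D n u i x - D n u i y)). unfold d in *. lra.
      rewrite <- Rabs_Ropp in H. pose proof (Rle_abs (- (x i - y i))). lra. }
    split.
    + intros x Hxn HNE. destruct (Hx x Hxn). pose proof (NE_neg n u x i HNE Hi ltac:(lra)). lra.
    + intros l Hl x Hxn HND. destruct (Hx x Hxn) as [H1 H2]. apply ND_iff in HND; [|lra].
      destruct HND as [_ HE]. specialize (HE i Hi).
      assert (dd : d / 2 / l <= - (D n u i x / l)).
      { replace (- (D n u i x / l)) with ((- D n u i x) / l) by (field; lra).
        unfold Rdiv; apply Rmult_le_compat_r; [apply Rlt_le, Rinv_0_lt_compat|]; lra. }
      pose proof (sig_one _ _ dd). rewrite sig_neg in H. pose proof (exp_small (d / 2) l ltac:(lra) ltac:(lra)).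
      assert (l / (d / 2) <= y i / 2).
      { apply Rmult_le_reg_l with (d / 2). lra. replace (d / 2 * (l / (d / 2))) with l by (field; lra).
        destruct Hl. nra. }
      rewrite <- HE in H. lra. Qed.

Lemma cover1 (dl : R -> R) : (forall t, 0 <= t <= 1 -> 0 < dl t) ->
  exists T : list R, (forall t, In t T -> 0 <= t <= 1) /\
    forall s, 0 <= s <= 1 -> exists t, In t T /\ Rabs (s - t) < dl t.
Proof. intros Hpos.
  assert (Hc : forall t : R, (exists s, (0 <= t <= 1 /\ Rabs (s - t) < dl t)) -> 0 <= t <= 1).
  { intros t [s [A _]]. auto. }
  set (fam := mkfamily (fun t => 0 <= t <= 1) (fun t s => 0 <= t <= 1 /\ Rabs (s - t) < dl t) Hc).
  destruct (compact_P3 0 1 fam) as [Dm [Hcov Hfin]].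
  - split.
    + intros s Hs. exists s. simpl. split; auto. replace (s - s) with 0 by ring. rewrite Rabs_R0. apply Hpos; auto.
    + intros t s [Ht Hs]. set (e := dl t - Rabs (s - t)).
      assert (He : 0 < e) by (unfold e; lra).
      exists (mkposreal e He). intros z Hz. unfold disc in Hz. simpl in Hz. simpl. split; auto.
      replace (z - t) with ((z - s) + (s - t)) by ring. eapply Rle_lt_trans. apply Rabs_triang. unfold e in Hz. lra.
  - destruct Hfin as [l Hl]. exists l. split.
    + intros t Ht. apply Hl in Ht. destruct Ht as [A _]. exact A.
    + intros s Hs. destruct (Hcov s Hs) as [t [[A1 A2] A3]]. exists t. split; auto.
      apply Hl. split; auto. Qed.

Definition lmin (l : list (nat -> R)) (h : (nat -> R) -> R) : R := fold_right (fun y m => Rmin (h y) m) 1 l.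

Lemma lmin_pos l h : (forall y, In y l -> 0 < h y) -> 0 < lmin l h.
Proof. induction l; simpl; intros. lra. apply Rmin_glb_lt. apply H; auto. apply IHl; auto. Qed.

Lemma lmin_le l h y : In y l -> lmin l h <= h y.
Proof. induction l; simpl; intros. contradiction. destruct H. subst. apply Rmin_l.
  eapply Rle_trans. apply Rmin_r. auto. Qed.

Lemma cover_n m : forall rho : (nat -> R) -> R, (forall y, Delta_set m y -> 0 < rho y) ->
  exists L : list (nat -> R), (forall y, In y L -> Delta_set m y) /\
    forall x, Delta_set m x -> exists y, In y L /\ near m y x (rho y).
Proof. induction m; intros rho Hrho.
  - exists ((fun _ => 0) :: nil). split.
    + intros y [<-|[]]. intros i. split; intros; lia || lra.
    + intros x Hx. exists (fun _ => 0). split. left; auto. intros j Hj. lia.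
  - assert (Hslice : forall t, 0 <= t <= 1 -> forall y, Delta_set m y -> Delta_set (S m) (xupd y m t)).
    { intros t Ht y Hy i. unfold xupd. destruct (Nat.eqb_spec i m).
      - subst. split; intros; auto. lia.
      - destruct (Hy i) as [A B]. split; intros. apply A; lia. apply B; lia. }
    assert (HL : forall t, {L : list (nat -> R) | 0 <= t <= 1 ->
        (forall y, In y L -> Delta_set m y) /\
        forall x, Delta_set m x -> exists y, In y L /\ near m y x (rho (xupd y m t) / 2)}).
    { intro t. apply constructive_indefinite_description.
      destruct (classic (0 <= t <= 1)) as [Ht|Ht].
      - destruct (IHm (fun y => rho (xupd y m t) / 2)) as [L HL].
        intros y Hy. assert (0 < rho (xupd y m t)) by (apply Hrho, Hslice; auto). lra.
        exists L. auto.
      - exists nil. tauto. }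
    set (Lt := fun t => proj1_sig (HL t)).
    assert (HLt : forall t, 0 <= t <= 1 -> (forall y, In y (Lt t) -> Delta_set m y) /\
        forall x, Delta_set m x -> exists y, In y (Lt t) /\ near m y x (rho (xupd y m t) / 2)).
    { intros t Ht. unfold Lt. destruct (HL t). simpl. auto. }
    set (dl := fun t => lmin (Lt t) (fun y => rho (xupd y m t) / 2)).
    destruct (cover1 dl) as [T [HT HTc]].
    { intros t Ht. unfold dl. apply lmin_pos. intros y Hy. destruct (HLt t Ht) as [A _].
      assert (0 < rho (xupd y m t)) by (apply Hrho, Hslice; auto). lra. }
    exists (flat_map (fun t => map (fun y => xupd y m t) (Lt t)) T). split.
    + intros z Hz. apply in_flat_map in Hz. destruct Hz as [t [Ht Hz]]. apply in_map_iff in Hz.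
      destruct Hz as [y [<- Hy]]. apply Hslice. apply HT; auto. destruct (HLt t (HT t Ht)) as [A _]. auto.
    + intros x Hx. destruct (Hx m) as [A _]. specialize (A ltac:(lia)).
      destruct (HTc (x m) A) as [t [Ht Hdt]].
      assert (Hx' : Delta_set m (xupd x m 0)).
      { intros i. unfold xupd. destruct (Nat.eqb_spec i m). subst. split; intros. lia. auto.
        destruct (Hx i) as [B C]. split; intros. apply B; lia. apply C; lia. }
      destruct (HLt t (HT t Ht)) as [_ B]. destruct (B _ Hx') as [y [Hy Hn]].
      exists (xupd y m t). split.
      * apply in_flat_map. exists t. split; auto. apply in_map_iff. exists y. auto.
      * assert (0 < rho (xupd y m t)) by (apply Hrho, Hslice; auto; destruct (HLt t (HT t Ht)) as [C _]; auto).
        intros j Hj. destruct (Nat.eq_dec j m).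
        -- subst. rewrite xupd_same. unfold dl in Hdt.
           pose proof (lmin_le (Lt t) (fun y => rho (xupd y m t) / 2) y Hy). simpl in H0. lra.
        -- rewrite xupd_other by auto. specialize (Hn j ltac:(lia)). rewrite xupd_other in Hn by auto. lra. Qed.

Definition Pdat n u y (r l1 dlt : R) (f : R -> nat -> R) : Prop :=
  0 < r /\ 0 < l1 /\ 0 < dlt /\ dlt <= l1 /\
  (NE n u y ->
     (forall x, NE n u x -> near n y x r -> x = y) /\
     (forall l, 0 < l <= l1 -> ND n u l (f l)) /\
     (forall l, 0 < l <= l1 -> forall x, ND n u l x -> near n y x r -> x = f l) /\
     (forall l, 0 < l < l1 -> forall i, continuity_pt (fun l => f l i) l) /\
     (forall e, 0 < e -> exists d, 0 < d /\ forall l, 0 < l < d -> l <= l1 -> forall i, Rabs (f l i - y i) < e) /\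
     (forall l, 0 < l < dlt -> forall i, Rabs (f l i - y i) < r / 2)) /\
  (~ NE n u y ->
     (forall x, near n y x r -> ~ NE n u x) /\
     (forall l, 0 < l <= l1 -> forall x, near n y x r -> ~ ND n u l x)).

Lemma Pdat_exists n u y : regular_game n u -> Delta_set n y ->
  exists p : R * R * R * (R -> nat -> R), Pdat n u y (fst (fst (fst p))) (snd (fst (fst p))) (snd (fst p)) (snd p).
Proof. intros Hreg HD. destruct (classic (NE n u y)) as [HN|HN].
  - destruct (Loc_exists n u y HN (Hreg y HN)) as [G [g [eps [Cb [dd [rho [Lg [Cl [K [HL [l1 HLam]]]]]]]]]]].
    destruct (local_B n u y G g eps Cb dd rho Lg Cl K l1 HL HLam) as [f [B1 [B2 [B3 [B4 B5]]]]].
    pose proof (L_K _ _ _ _ _ _ _ _ _ _ _ _ HL) as HK. pose proof (L_rho _ _ _ _ _ _ _ _ _ _ _ _ HL) as Hr.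
    assert (Hr' : 0 < rho / K) by (apply Rdiv_lt_0_compat; lra).
    destruct (B5 (rho / K / 2) ltac:(lra)) as [d [Hd Hd']].
    destruct HLam as [Hl1 _].
    exists (rho / K, l1, Rmin d l1, f). simpl. split; auto. split; auto. split. apply Rmin_glb_lt; auto.
    split. apply Rmin_r. split.
    + intros _. split; [|split; [|split; [|split; [|split]]]]; auto. intros l0 Hl0 i. apply Hd'. pose proof (Rmin_l d l1). lra.
      pose proof (Rmin_r d l1). lra.
    + intros C; contradiction.
  - destruct (local_A n u y HD HN) as [r [l1 [Hr [Hl1 [A1 A2]]]]].
    exists (r, l1, l1, fun _ _ => 0). simpl. repeat split; auto; try lra; contradiction. Qed.

Lemma In_filter_NE n u (L : list (nat -> R)) x :
  In x (filter (fun y => if excluded_middle_informative (NE n u y) then true else false) L) <-> In x L /\ NE n u x.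
Proof. rewrite filter_In. destruct (excluded_middle_informative (NE n u x)); split; intros [A B]; auto; try discriminate;
  try contradiction. Qed.

Theorem theorem3 (n : nat) (ui : nat -> list bool -> R) (u : list bool -> R)
  (Hpot : is_potential n ui u) (Hreg : regular_game n u) :
  (exists L : list (nat -> R), forall x, NE n u x <-> In x L) /\
  exists lam0 : R, 0 < lam0 /\
  exists xl : (nat -> R) -> R -> (nat -> R),
    (forall xs, NE n u xs -> forall lam, 0 < lam < lam0 -> Delta_set n (xl xs lam)) /\
    (forall xs, NE n u xs -> forall i : nat, forall lam, 0 < lam < lam0 ->
        continuity_pt (fun l => xl xs l i) lam) /\
    (forall lam, 0 < lam < lam0 -> forall xs ys, NE n u xs -> NE n u ys ->
        xs <> ys -> xl xs lam <> xl ys lam) /\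
    (forall lam, 0 < lam < lam0 -> forall x,
        ND n u lam x <-> exists xs, NE n u xs /\ x = xl xs lam) /\
    (forall xs, NE n u xs -> forall i : nat, forall eps, 0 < eps ->
        exists delta, 0 < delta /\ forall lam, 0 < lam < delta -> lam < lam0 ->
          Rabs (xl xs lam i - xs i) < eps).
Proof.
  assert (Hdat : forall y, {p : R * R * R * (R -> nat -> R) | Delta_set n y ->
     Pdat n u y (fst (fst (fst p))) (snd (fst (fst p))) (snd (fst p)) (snd p)}).
  { intro y. apply constructive_indefinite_description.
    destruct (classic (Delta_set n y)) as [HD|HD].
    - destruct (Pdat_exists n u y Hreg HD) as [p Hp]. exists p. auto.
    - exists (1, 1, 1, fun _ _ => 0). tauto. }
  set (Rr := fun y => fst (fst (fst (proj1_sig (Hdat y))))).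
  set (Lm := fun y => snd (fst (fst (proj1_sig (Hdat y))))).
  set (Dl := fun y => snd (fst (proj1_sig (Hdat y)))).
  set (F := fun y => snd (proj1_sig (Hdat y))).
  assert (HP : forall y, Delta_set n y -> Pdat n u y (Rr y) (Lm y) (Dl y) (F y)).
  { intros y HD. unfold Rr, Lm, Dl, F. destruct (Hdat y) as [p Hp]. simpl. auto. }
  clearbody Rr Lm Dl F.
  destruct (cover_n n Rr) as [L [HLD HLc]].
  { intros y HD. destruct (HP y HD) as [A _]. auto. }
  set (LNE := filter (fun y => if excluded_middle_informative (NE n u y) then true else false) L).
  assert (HNEin : forall x, NE n u x <-> In x LNE).
  { intros x. unfold LNE. rewrite In_filter_NE. split; [|tauto]. intros HN. split; auto.
    destruct (HLc x (proj1 HN)) as [y [Hy Hn]].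
    destruct (HP y (HLD y Hy)) as [_ [_ [_ [_ [PB PA]]]]].
    destruct (classic (NE n u y)) as [HNy|HNy].
    - destruct (PB HNy) as [B1 _]. rewrite (B1 x HN Hn). auto.
    - destruct (PA HNy) as [A1 _]. exfalso. apply (A1 x Hn HN). }
  assert (HNL : forall x, NE n u x -> In x L).
  { intros x HN. apply HNEin in HN. unfold LNE in HN. apply In_filter_NE in HN. tauto. }
  set (lam0 := lmin L Dl).
  assert (Hlam0 : 0 < lam0).
  { apply lmin_pos. intros y Hy. destruct (HP y (HLD y Hy)) as [_ [_ [A _]]]. auto. }
  assert (Hle : forall y, In y L -> lam0 <= Dl y /\ Dl y <= Lm y).
  { intros y Hy. split. apply lmin_le; auto. destruct (HP y (HLD y Hy)) as [_ [_ [_ [A _]]]]. auto. }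
  split. exists LNE. auto.
  exists lam0. split; auto. exists F.
  assert (PBx : forall xs, NE n u xs -> _) by (intros xs HN; exact (proj1 (proj2 (proj2 (proj2 (proj2 (HP xs (proj1 HN)))))) HN)).
  split; [|split; [|split; [|split]]].
  - intros xs HN lam Hl. destruct (PBx xs HN) as [_ [B2 _]]. pose proof (Hle xs (HNL xs HN)).
    destruct (B2 lam ltac:(lra)) as [A _]. auto.
  - intros xs HN i lam Hl. destruct (PBx xs HN) as [_ [_ [_ [B4 _]]]]. pose proof (Hle xs (HNL xs HN)).
    apply B4. lra.
  - intros lam Hl xs ys HNx HNy Hne Heq.
    destruct (PBx xs HNx) as [Bx1 [_ [_ [_ [_ Bx6]]]]]. destruct (PBx ys HNy) as [By1 [_ [_ [_ [_ By6]]]]].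
    pose proof (Hle xs (HNL xs HNx)). pose proof (Hle ys (HNL ys HNy)).
    assert (Ex : forall i, Rabs (F xs lam i - xs i) < Rr xs / 2) by (intro i; apply Bx6; lra).
    assert (Ey : forall i, Rabs (F xs lam i - ys i) < Rr ys / 2) by (intro i; rewrite Heq; apply By6; lra).
    apply Hne. destruct (Rle_dec (Rr xs) (Rr ys)).
    + apply (By1 xs HNx). intros j Hj. specialize (Ex j). specialize (Ey j).
      replace (xs j - ys j) with ((F xs lam j - ys j) - (F xs lam j - xs j)) by ring.
      eapply Rle_trans. apply Rabs_triang. rewrite Rabs_Ropp. lra.
    + symmetry. apply (Bx1 ys HNy). intros j Hj. specialize (Ex j). specialize (Ey j).
      replace (ys j - xs j) with ((F xs lam j - xs j) - (F xs lam j - ys j)) by ring.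
      eapply Rle_trans. apply Rabs_triang. rewrite Rabs_Ropp. lra.
  - intros lam Hl x. split.
    + intros HND. destruct (HLc x (proj1 HND)) as [y [Hy Hn]].
      pose proof (Hle y Hy).
      destruct (HP y (HLD y Hy)) as [_ [_ [_ [_ [PB PA]]]]].
      destruct (classic (NE n u y)) as [HNy|HNy].
      * exists y. split; auto. destruct (PB HNy) as [_ [_ [B3 _]]]. apply B3; auto. lra.
      * destruct (PA HNy) as [_ A2]. exfalso. apply (A2 lam ltac:(lra) x Hn HND).
    + intros [xs [HN ->]]. destruct (PBx xs HN) as [_ [B2 _]]. pose proof (Hle xs (HNL xs HN)).
      apply B2. lra.
  - intros xs HN i e He. destruct (PBx xs HN) as [_ [_ [_ [_ [B5 _]]]]]. pose proof (Hle xs (HNL xs HN)).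
    destruct (B5 e He) as [d [Hd Hd']]. exists d. split; auto. intros lam Hl Hl0. apply Hd'; auto. lra.
Qed.
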